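(* There exist $\varepsilon>0$, a constant $\tilde C>0$ and a constant $0<L<1$ such that for all $|u|\le1$, all $|x|\le\rho+\varepsilon$ and all $k\ge0$, $$|\Sigma_k(x,u)|\le\tilde C|u-1|L^k.$$
   Context: Let $y(x)=\sum_{n\ge1}y_nx^n$, $y_n$ the number of unlabelled rooted trees with $n$ vertices; it satisfies $y(x)=x\exp(\sum_{i\ge1}y(x^i)/i)$ and has radius of convergence $\rho\in(0,1)$ with $y(\rho)=1$. Define $y_0(x,u)=uy(x)$, $y_{k+1}(x,u)=x\exp\left(\sum_{i\ge1}y_k(x^i,u^i)/i\right)$, $w_k(x,u)=y_k(x,u)-y(x)$, and $\Sigma_k(x,u)=\sum_{i\ge2}\frac{w_k(x^i,u^i)}{i}$. *)

(* Defs.v *)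
From Stdlib Require Import Reals List Arith.
From Coquelicot Require Import Coquelicot.
Import ListNotations.
Open Scope R_scope.

(* ---- number of unlabelled rooted trees with n vertices (OEIS A000081) ----
   computed by the classical recurrence (Cayley/Otter):
   y_1 = 1,  n * y_(n+1) = sum_(k=1..n) (sum_(d | k) d * y_d) * y_(n-k+1). *)
Definition divsum (l : list nat) (k : nat) : nat :=
  (fold_right Nat.add 0
    (map (fun d => if Nat.eqb (Nat.modulo k d) 0 then d * nth d l 0 else 0)
         (seq 1 k)))%nat.

(* given l = [y_0; ...; y_(N-1)], compute y_N *)
Definition next_count (l : list nat) : nat :=
  let N := length l in
  (match N with
  | 0 => 0
  | 1 => 1
  | S n =>
      Nat.div
        (fold_right Nat.add 0
           (map (fun k => divsum l k * nth (n - k + 1) l 0) (seq 1 n)))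
        n
  end)%nat.

Fixpoint count_list (n : nat) : list nat :=
  match n with
  | 0 => [0%nat]
  | S m => let l := count_list m in l ++ [next_count l]
  end.

Definition tree_count (n : nat) : nat := nth n (count_list n) 0%nat.

Definition Cexp (z : C) : C :=
  (exp (Re z) * cos (Im z), exp (Re z) * sin (Im z)).

(* value of the complex series sum_(n>=0) a n (real and imaginary parts
   summed separately; agrees with the true sum whenever it converges) *)
Definition csum (a : nat -> C) : C :=
  (Series (fun n => Re (a n)), Series (fun n => Im (a n))).

Definition ytree (x : C) : C :=
  csum (fun n => Cmult (RtoC (INR (tree_count n))) (Cpow x n)).

Definition rho : R := real (CV_radius (fun n => INR (tree_count n))).

Fixpoint yk (k : nat) : C -> C -> C :=
  match k with
  | 0 => fun x u => Cmult u (ytree x)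
  | S k' => fun x u =>
      Cmult x (Cexp (csum (fun j =>
        Cdiv (yk k' (Cpow x (S j)) (Cpow u (S j))) (RtoC (INR (S j))))))
  end.

Definition wk (k : nat) (x u : C) : C := Cminus (yk k x u) (ytree x).

Definition Sigmak (k : nat) (x u : C) : C :=
  csum (fun j =>
    Cdiv (wk k (Cpow x (S (S j))) (Cpow u (S (S j)))) (RtoC (INR (S (S j))))).

(* Main.v *)
Require Import Defs.
From Stdlib Require Import Reals Lra Lia List Arith.
From Coquelicot Require Import Coquelicot.
Import ListNotations.
Open Scope R_scope.

Fixpoint rs (f : nat -> R) (n : nat) : R :=
  match n with O => 0 | S k => rs f k + f k end.

Lemma rs_ext f g n : (forall i, (i < n)%nat -> f i = g i) -> rs f n = rs g n.
Proof. induction n; simpl; intros H; auto. rewrite IHn by (intros; apply H; lia). rewrite H by lia. auto. Qed.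

Lemma rs_plus f g n : rs (fun i => f i + g i) n = rs f n + rs g n.
Proof. induction n; simpl; [lra|]. rewrite IHn; lra. Qed.

Lemma rs_scal c f n : rs (fun i => c * f i) n = c * rs f n.
Proof. induction n; simpl; [lra|]. rewrite IHn; lra. Qed.

Lemma rs_opp f n : rs (fun i => - f i) n = - rs f n.
Proof. induction n; simpl; [lra|]. rewrite IHn; lra. Qed.

Lemma rs_zero n : rs (fun _ => 0) n = 0.
Proof. induction n; simpl; [lra|]. rewrite IHn; lra. Qed.

Lemma rs_le f g n : (forall i, (i < n)%nat -> f i <= g i) -> rs f n <= rs g n.
Proof. induction n; simpl; intros H; [lra|]. specialize (IHn (fun i Hi => H i ltac:(lia))). specialize (H n ltac:(lia)). lra. Qed.

Lemma rs_nonneg f n : (forall i, (i < n)%nat -> 0 <= f i) -> 0 <= rs f n.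
Proof. intros H. rewrite <- (rs_zero n). apply rs_le. auto. Qed.

Lemma rs_shift_l g n : rs g (S n) = g O + rs (fun j => g (S j)) n.
Proof. induction n; simpl in *; [lra|]. rewrite IHn. lra. Qed.

Lemma rs_split F a b : rs F (a + b) = rs F a + rs (fun l => F (a + l)%nat) b.
Proof. induction b; simpl. rewrite Nat.add_0_r; lra. rewrite Nat.add_succ_r; simpl. rewrite IHb; lra. Qed.

Lemma rs_rev f n : rs f n = rs (fun j => f (n - 1 - j)%nat) n.
Proof.
  induction n. reflexivity.
  rewrite (rs_shift_l (fun j => f (S n - 1 - j)%nat)). change (rs f (S n)) with (rs f n + f n).
  replace (S n - 1 - 0)%nat with n by lia.
  rewrite IHn. rewrite Rplus_comm. f_equal.
  apply rs_ext. intros i Hi. f_equal. lia.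
Qed.

Lemma rs_switch (F : nat -> nat -> R) n m :
  rs (fun i => rs (fun j => F i j) m) n = rs (fun j => rs (fun i => F i j) n) m.
Proof.
  induction n; simpl. symmetry. apply rs_zero.
  rewrite IHn. rewrite <- rs_plus. reflexivity.
Qed.

Lemma rs_single F k n : rs (fun j => if Nat.eqb j k then F j else 0) n =
  if Nat.ltb k n then F k else 0.
Proof.
  induction n; simpl. reflexivity.
  rewrite IHn. destruct (Nat.eqb_spec n k); destruct (Nat.ltb_spec k n); destruct (Nat.ltb_spec k (S n)); subst; try lia; lra.
Qed.

Definition conv (u v : nat -> R) (n : nat) : R := rs (fun j => u j * v (n - j)%nat) (S n).

Lemma conv_comm u v n : conv u v n = conv v u n.
Proof.
  unfold conv. rewrite rs_rev. apply rs_ext. intros i Hi.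
  replace (S n - 1 - i)%nat with (n - i)%nat by lia.
  replace (n - (n - i))%nat with i by lia. lra.
Qed.

Lemma rs_tri (F : nat -> R) j n : (j <= n)%nat ->
  rs (fun i => if Nat.leb j i then F i else 0) (S n) = rs (fun l => F (j + l)%nat) (S (n - j)).
Proof.
  intros H. replace (S n) with (j + S (n - j))%nat by lia.
  rewrite rs_split. rewrite (rs_ext _ (fun _ => 0)).
  rewrite rs_zero, Rplus_0_l. apply rs_ext. intros i Hi.
  destruct (Nat.leb_spec j (j+i)); [reflexivity| lia].
  intros i Hi. destruct (Nat.leb_spec j i); [lia|reflexivity].
Qed.

Lemma conv_assoc u v w n : conv (conv u v) w n = conv u (conv v w) n.
Proof.
  unfold conv.
  transitivity (rs (fun i => rs (fun j => if Nat.leb j i then u j * v (i - j)%nat * w (n - i)%nat else 0) (S n)) (S n)).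
  - apply rs_ext. intros i Hi.
    replace (S n) with (S i + (n - i))%nat by lia.
    rewrite rs_split. rewrite (rs_ext (fun l => if Nat.leb (S i + l) i then _ else 0) (fun _ => 0)).
    rewrite rs_zero, Rplus_0_r. rewrite Rmult_comm, <- rs_scal. apply rs_ext. intros j Hj.
    destruct (Nat.leb_spec j i); [lra|lia].
    intros l _. destruct (Nat.leb_spec (S i + l) i); [lia|reflexivity].
  - rewrite rs_switch. apply rs_ext. intros j Hj.
    rewrite (rs_tri (fun i => u j * v (i - j)%nat * w (n - i)%nat)) by lia.
    rewrite <- rs_scal. apply rs_ext. intros l Hl.
    replace (j + l - j)%nat with l by lia. replace (n - (j + l))%nat with (n - j - l)%nat by lia. lra.
Qed.

Lemma conv_plus_l u v w n : conv (fun i => u i + v i) w n = conv u w n + conv v w n.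
Proof. unfold conv. rewrite <- rs_plus. apply rs_ext; intros; lra. Qed.

Lemma conv_scal_l c u w n : conv (fun i => c * u i) w n = c * conv u w n.
Proof. unfold conv. rewrite <- rs_scal. apply rs_ext; intros; lra. Qed.

Lemma conv_ext u u' v v' n : (forall i, u i = u' i) -> (forall i, v i = v' i) -> conv u v n = conv u' v' n.
Proof. intros H1 H2. unfold conv. apply rs_ext. intros. rewrite H1, H2. auto. Qed.

Lemma conv_ext_l u u' v n : (forall i, u i = u' i) -> conv u v n = conv u' v n.
Proof. intros H. apply conv_ext; auto. Qed.

Definition delta (n : nat) : R := if Nat.eqb n 0 then 1 else 0.

Lemma conv_delta_l u n : conv delta u n = u n.
Proof.
  unfold conv, delta. rewrite (rs_ext _ (fun j => if Nat.eqb j 0 then u (n - j)%nat else 0)).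
  rewrite rs_single. simpl. f_equal. lia.
  intros i _. destruct (Nat.eqb i 0); lra.
Qed.

Lemma conv_delta_r u n : conv u delta n = u n.
Proof. rewrite conv_comm. apply conv_delta_l. Qed.

Definition Dr (u : nat -> R) (n : nat) : R := INR n * u n.

Lemma Dr_conv u v n : Dr (conv u v) n = conv (Dr u) v n + conv u (Dr v) n.
Proof.
  unfold Dr, conv. rewrite <- rs_plus. rewrite <- rs_scal. apply rs_ext.
  intros i Hi. rewrite (minus_INR n i) by lia. ring.
Qed.

Lemma Dr_conv_rule u v be ga :
  (forall n, Dr u n = conv be u n) -> (forall n, Dr v n = conv ga v n) ->
  forall n, Dr (conv u v) n = conv (fun i => be i + ga i) (conv u v) n.
Proof.
  intros Hu Hv n. rewrite Dr_conv, conv_plus_l. f_equal.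
  - rewrite (conv_ext_l _ _ _ _ Hu). apply conv_assoc.
  - rewrite conv_comm, (conv_ext_l _ _ _ _ Hv), conv_assoc. apply conv_ext; [reflexivity| intro; apply conv_comm].
Qed.

Definition fk (k n : nat) : R := if Nat.eqb (n mod k) 0 then 1 else 0.
Definition ek (k n : nat) : R := delta n + (-1) * (if Nat.eqb n k then 1 else 0).
Definition betak (k n : nat) : R :=
  if Nat.eqb n 0 then 0 else if Nat.eqb (n mod k) 0 then INR k else 0.

Lemma conv_shift k (f : nat -> R) n :
  conv (fun i => if Nat.eqb i k then 1 else 0) f n = if Nat.leb k n then f (n - k)%nat else 0.
Proof.
  unfold conv. rewrite (rs_ext _ (fun j => if Nat.eqb j k then f (n - j)%nat else 0)).
  rewrite rs_single. destruct (Nat.ltb_spec k (S n)); destruct (Nat.leb_spec k n); try lia; auto.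
  intros i _. destruct (Nat.eqb i k); lra.
Qed.

Lemma mod_sub_k k n : (0 < k)%nat -> (k <= n)%nat -> (n mod k = (n - k) mod k)%nat.
Proof.
  intros Hk Hn. replace n with ((n - k) + 1 * k)%nat at 1 by lia.
  apply Nat.Div0.mod_add.
Qed.

Lemma conv_ek_fk k n : (0 < k)%nat -> conv (ek k) (fk k) n = delta n.
Proof.
  intros Hk. unfold ek. rewrite conv_plus_l, conv_scal_l, conv_delta_l, conv_shift.
  unfold fk, delta. destruct (Nat.leb_spec k n).
  - rewrite <- mod_sub_k by lia. destruct (Nat.eqb_spec n 0); [lia|].
    destruct (Nat.eqb (n mod k) 0); lra.
  - rewrite Nat.mod_small by lia. destruct (Nat.eqb n 0); lra.
Qed.

Lemma Dr_delta n : Dr delta n = 0.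
Proof. unfold Dr, delta. destruct (Nat.eqb_spec n 0); subst; simpl; lra. Qed.

Lemma Dr_ek k n : Dr (ek k) n = (- INR k) * (if Nat.eqb n k then 1 else 0).
Proof.
  unfold Dr, ek, delta. destruct (Nat.eqb_spec n 0); destruct (Nat.eqb_spec n k); subst; simpl; try lra.
Qed.

Lemma Dr_fk k : (0 < k)%nat -> forall n, Dr (fk k) n = conv (betak k) (fk k) n.
Proof.
  intros Hk n.
  assert (H0 : forall m, conv (Dr (ek k)) (fk k) m + conv (ek k) (Dr (fk k)) m = 0).
  { intros m. rewrite <- Dr_conv. unfold Dr. rewrite conv_ek_fk by auto. apply Dr_delta. }
  rewrite <- (conv_delta_l (Dr (fk k))).
  rewrite (conv_ext_l _ (conv (fk k) (ek k))) by (intros; rewrite conv_comm, conv_ek_fk; auto).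
  rewrite conv_assoc. rewrite conv_comm.
  apply conv_ext_l. intros m.
  assert (E := H0 m). rewrite (conv_ext_l _ (fun i => (- INR k) * (if Nat.eqb i k then 1 else 0))) in E by apply Dr_ek.
  rewrite conv_scal_l, conv_shift in E.
  assert (E2 : conv (ek k) (Dr (fk k)) m = INR k * (if Nat.leb k m then fk k (m - k) else 0)) by lra.
  rewrite E2. unfold betak, fk. destruct (Nat.leb_spec k m).
  - rewrite <- mod_sub_k by lia. destruct (Nat.eqb_spec m 0); [lia|]. destruct (Nat.eqb (m mod k) 0); lra.
  - destruct (Nat.eqb_spec m 0). lra. rewrite Nat.mod_small by lia. destruct (Nat.eqb_spec m 0); [lia|]. lra.
Qed.

Fixpoint fpow (k a : nat) : nat -> R :=
  match a with O => delta | S a' => fun n => conv (fpow k a') (fk k) n end.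

Lemma Dr_fpow k a : (0 < k)%nat -> forall n, Dr (fpow k a) n = conv (fun i => INR a * betak k i) (fpow k a) n.
Proof.
  intros Hk. induction a; intros n.
  - simpl. rewrite Dr_delta, conv_scal_l. lra.
  - simpl fpow. rewrite (Dr_conv_rule _ _ _ _ IHa (Dr_fk k Hk)).
    apply conv_ext_l. intros i. rewrite S_INR. lra.
Qed.

Definition yv (n : nat) : R := INR (tree_count n).

Fixpoint Pp (M : nat) : nat -> R :=
  match M with O => delta | S M' => fun n => conv (Pp M') (fpow (S M') (tree_count (S M'))) n end.

Definition Bb (M i : nat) : R := rs (fun k => yv (S k) * betak (S k) i) M.

Lemma Dr_Pp M : forall n, Dr (Pp M) n = conv (Bb M) (Pp M) n.
Proof.
  induction M; intros n.
  - simpl. rewrite Dr_delta. unfold Bb. simpl. rewrite (conv_ext_l _ (fun i => 0 * delta i)). rewrite conv_scal_l; lra.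
    intros; lra.
  - simpl Pp. rewrite (Dr_conv_rule _ _ _ _ IHM (Dr_fpow (S M) (tree_count (S M)) (Nat.lt_0_succ M))).
    apply conv_ext_l. intros i. unfold Bb. simpl. unfold yv. reflexivity.
Qed.

Definition isN (x : R) := exists m : nat, x = INR m.

Lemma isN_rs f n : (forall i, isN (f i)) -> isN (rs f n).
Proof.
  intros H. induction n; simpl. exists O; auto.
  destruct IHn as [a Ha]. destruct (H n) as [b Hb]. exists (a + b)%nat. rewrite plus_INR. lra.
Qed.

Lemma isN_conv u v n : (forall i, isN (u i)) -> (forall i, isN (v i)) -> isN (conv u v n).
Proof.
  intros Hu Hv. unfold conv. apply isN_rs. intros i.
  destruct (Hu i) as [a Ha]. destruct (Hv (n - i)%nat) as [b Hb]. exists (a * b)%nat. rewrite mult_INR, Ha, Hb. reflexivity.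
Qed.

Lemma isN_delta n : isN (delta n).
Proof. unfold delta. destruct (Nat.eqb n 0). exists 1%nat; auto. exists O; auto. Qed.

Lemma isN_fk k n : isN (fk k n).
Proof. unfold fk. destruct (Nat.eqb _ 0). exists 1%nat; auto. exists O; auto. Qed.

Lemma isN_fpow k a n : isN (fpow k a n).
Proof. revert n; induction a; intros n; simpl. apply isN_delta. apply isN_conv; auto. apply isN_fk. Qed.

Lemma isN_Pp M n : isN (Pp M n).
Proof. revert n; induction M; intros n; simpl. apply isN_delta. apply isN_conv; auto. intros; apply isN_fpow. Qed.

Lemma conv_0 u v : conv u v 0 = u O * v O.
Proof. unfold conv. simpl. lra. Qed.

Lemma fpow_0 k a : fpow k a 0 = 1.
Proof. induction a; simpl. reflexivity. rewrite conv_0, IHa. unfold fk. rewrite Nat.Div0.mod_0_l. simpl. lra. Qed.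

Lemma Pp_0 M : Pp M 0 = 1.
Proof. induction M; simpl. reflexivity. rewrite conv_0, IHM, fpow_0. lra. Qed.

Definition bR (l : nat) : R :=
  rs (fun d => if Nat.eqb (l mod (S d)) 0 then INR (S d) * yv (S d) else 0) l.

Lemma Bb_0 M : Bb M 0 = 0.
Proof. unfold Bb. rewrite (rs_ext _ (fun _ => 0)). apply rs_zero. intros; unfold betak; simpl; lra. Qed.

Lemma Bb_bR M l : (1 <= l <= M)%nat -> Bb M l = bR l.
Proof.
  intros H. unfold Bb, bR. replace M with (l + (M - l))%nat by lia.
  rewrite rs_split. rewrite (rs_ext (fun l0 => yv (S (l + l0)) * betak (S (l + l0)) l) (fun _ => 0)). rewrite rs_zero, Rplus_0_r.
  - apply rs_ext. intros i Hi. unfold betak. destruct (Nat.eqb_spec l 0); [lia|].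
    destruct (Nat.eqb (l mod S i) 0); lra.
  - intros i _. unfold betak. destruct (Nat.eqb_spec l 0); [lia|].
    rewrite Nat.mod_small by lia. destruct (Nat.eqb_spec l 0); [lia|]. lra.
Qed.

Lemma count_list_length m : length (count_list m) = S m.
Proof. induction m; simpl. reflexivity. rewrite length_app, IHm. simpl. lia. Qed.

Lemma nth_count_list i m : (i <= m)%nat -> nth i (count_list m) 0%nat = tree_count i.
Proof.
  intros H. induction H. reflexivity.
  simpl. rewrite app_nth1. auto. rewrite count_list_length. lia.
Qed.

Lemma tree_count_S m : tree_count (S m) = next_count (count_list m).
Proof.
  unfold tree_count. simpl. rewrite app_nth2; rewrite count_list_length. 2: lia.
  rewrite Nat.sub_diag. reflexivity.
Qed.

Lemma fold_seq (g : nat -> nat) s len :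
  INR (fold_right Nat.add 0%nat (map g (seq s len))) = rs (fun i => INR (g (s + i)%nat)) len.
Proof.
  revert s; induction len; intros s. reflexivity.
  simpl seq. simpl map. simpl fold_right. rewrite plus_INR, IHlen.
  rewrite rs_shift_l. rewrite Nat.add_0_r. f_equal.
  apply rs_ext. intros. f_equal. f_equal. lia.
Qed.

Lemma divsum_R k m : (k <= m)%nat -> INR (divsum (count_list m) k) = bR k.
Proof.
  intros H. unfold divsum. rewrite fold_seq. unfold bR. apply rs_ext. intros i Hi.
  simpl (1 + i)%nat. destruct (Nat.eqb (k mod S i) 0).
  rewrite mult_INR, nth_count_list by lia. reflexivity. reflexivity.
Qed.

Lemma tc_Pp M : forall m, (m <= M)%nat -> INR (tree_count (S m)) = Pp M m.
Proof.
  intros m. induction m as [m IH] using (well_founded_induction lt_wf). intros Hm.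
  destruct m as [|m'].
  - rewrite Pp_0. reflexivity.
  - set (m := S m').
    assert (Hnum : INR (fold_right Nat.add 0%nat (map (fun k => (divsum (count_list m) k * nth (m - k + 1) (count_list m) 0)%nat) (seq 1 m))) = INR m * Pp M m).
    { rewrite fold_seq.
      assert (HD := Dr_Pp M m). unfold Dr in HD. rewrite HD. unfold conv.
      rewrite rs_shift_l. rewrite Bb_0, Rmult_0_l, Rplus_0_l.
      apply rs_ext. intros i Hi. rewrite mult_INR. rewrite divsum_R by lia.
      rewrite Bb_bR by lia. f_equal. rewrite nth_count_list by lia.
      replace (m - (1 + i) + 1)%nat with (S (m - S i)) by lia.
      apply IH; lia. }
    destruct (isN_Pp M m) as [p Hp]. rewrite Hp in Hnum. rewrite <- mult_INR in Hnum.
    apply INR_eq in Hnum. rewrite Hp. f_equal.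
    rewrite tree_count_S. unfold next_count. rewrite count_list_length.
    unfold m in Hnum |- *. simpl length. 
    change (match S (S m') with 0 => 0 | 1 => 1 | S n => Nat.div (fold_right Nat.add 0 (map (fun k => (divsum (count_list (S m')) k * nth (n - k + 1) (count_list (S m')) 0)%nat) (seq 1 n))) n end)%nat
      with (Nat.div (fold_right Nat.add 0 (map (fun k => (divsum (count_list (S m')) k * nth (S m' - k + 1) (count_list (S m')) 0)%nat) (seq 1 (S m')))) (S m'))%nat.
    rewrite Hnum. rewrite Nat.mul_comm. apply Nat.div_mul. lia.
Qed.

Lemma REC m : INR m * yv (S m) = rs (fun i => bR (S i) * yv (m - i)%nat) m.
Proof.
  unfold yv. rewrite (tc_Pp m m) by lia.
  assert (HD := Dr_Pp m m). unfold Dr in HD. rewrite HD. unfold conv.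
  rewrite rs_shift_l. rewrite Bb_0, Rmult_0_l, Rplus_0_l.
  apply rs_ext. intros i Hi. rewrite Bb_bR by lia. f_equal.
  replace (m - i)%nat with (S (m - S i)) by lia. symmetry. apply tc_Pp. lia.
Qed.

Lemma yv_nonneg n : 0 <= yv n.
Proof. apply pos_INR. Qed.

Lemma bR_nonneg l : 0 <= bR l.
Proof. unfold bR. apply rs_nonneg. intros i _. destruct (Nat.eqb _ 0). apply Rmult_le_pos; [apply pos_INR|apply yv_nonneg]. lra. Qed.

Lemma INR_S_pos n : 0 < INR (S n).
Proof. apply lt_0_INR; lia. Qed.

Lemma sum_inv_sq n : (1 <= n)%nat -> rs (fun i => / (INR (S i) * INR (S i))) n <= 2 - / INR n.
Proof.
  intros Hn. induction Hn. simpl. lra.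
  cbn [rs]. assert (H1 : 0 < INR m) by (apply lt_0_INR; lia).
  rewrite S_INR. set (a := INR m) in *.
  assert (E : / a - / (a + 1) = / (a * (a + 1))) by (field; lra).
  assert (/ ((a + 1) * (a + 1)) <= / (a * (a + 1))).
  { apply Rinv_le_contravar. nra. nra. }
  lra.
Qed.

Lemma geom_bound k : (1 <= k)%nat ->
  rs (fun d => 16 ^ (S d) / INR (S d)) k <= 2 * 16 ^ k / INR k.
Proof.
  intros Hk. induction Hk. simpl. lra.
  cbn [rs]. assert (H1 : 0 < INR m) by (apply lt_0_INR; lia).
  assert (H16 : 0 < 16 ^ m) by (apply pow_lt; lra).
  rewrite S_INR. set (a := INR m) in *. set (p := 16 ^ m) in *.
  assert (2 * p / a + 16 * p / (a + 1) <= 2 * (16 * p) / (a + 1)).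
  { assert (1 <= a). { unfold a. apply (le_INR 1). auto. }
    unfold Rdiv. apply (Rmult_le_reg_r (a * (a + 1))). nra.
    replace ((2 * p * / a + 16 * p * / (a + 1)) * (a * (a + 1))) with (2 * p * (a + 1) + 16 * p * a) by (field; lra).
    replace (2 * (16 * p) * / (a + 1) * (a * (a + 1))) with (32 * p * a) by (field; lra).
    nra. }
  change (16 ^ S m) with (16 * p). lra.
Qed.

Lemma conv_sum_bound n : (1 <= n)%nat ->
  rs (fun i => / (INR (S i) * (INR (n - i) * INR (n - i)))) n <= 4 / INR (S n).
Proof.
  intros Hn. set (m := INR (S n)). assert (Hm : 0 < m) by apply INR_S_pos.
  assert (Hm1 : 1 <= m). { unfold m. apply (le_INR 1). lia. }
  transitivity (rs (fun i => / (m * m) + / (m * m) + / m * / (INR (S (n - 1 - i)) * INR (S (n - 1 - i)))) n).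
  - apply rs_le. intros i Hi.
    assert (Hk : 1 <= INR (S i)) by (apply (le_INR 1); lia).
    assert (Hj : 1 <= INR (n - i)) by (apply (le_INR 1); lia).
    replace (S (n - 1 - i)) with (n - i)%nat by lia.
    assert (Hs : INR (S i) + INR (n - i) = m).
    { unfold m. rewrite <- plus_INR. f_equal. lia. }
    set (k := INR (S i)) in *. set (j := INR (n - i)) in *.
    assert (E : / (k * (j * j)) = / (m * m) * / k + / (m * m) * / j + / m * / (j * j)).
    { rewrite <- Hs. field. lra. }
    rewrite E.
    assert (/ k <= 1) by (rewrite <- Rinv_1; apply Rinv_le_contravar; lra).
    assert (/ j <= 1) by (rewrite <- Rinv_1; apply Rinv_le_contravar; lra).
    assert (0 <= / (m * m)) by (apply Rlt_le, Rinv_0_lt_compat; nra).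
    nra.
  - rewrite rs_plus, rs_plus. rewrite rs_scal.
    rewrite <- (rs_rev (fun i => / (INR (S i) * INR (S i)))).
    rewrite !(rs_ext (fun _ => / (m * m)) (fun _ => / (m * m) * 1)) by (intros; lra).
    rewrite !rs_scal.
    assert (HS := sum_inv_sq n Hn).
    assert (H1 : rs (fun _ => 1) n = INR n).
    { clear. induction n; simpl. reflexivity. rewrite IHn. destruct n; simpl; lra. }
    rewrite H1.
    assert (Hnm : INR n <= m) by (unfold m; rewrite S_INR; lra).
    assert (0 < / INR n) by (apply Rinv_0_lt_compat; apply lt_0_INR; lia).
    assert (E1 : / (m * m) * INR n <= / m).
    { unfold Rdiv. apply (Rmult_le_reg_r (m * m)). nra.
      replace (/ (m * m) * INR n * (m * m)) with (INR n) by (field; lra).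
      replace (/ m * (m * m)) with m by (field; lra). lra. }
    assert (E2 : / m * (2 - / INR n) <= / m * 2).
    { apply Rmult_le_compat_l. apply Rlt_le, Rinv_0_lt_compat; lra. lra. }
    assert (E3 : / m * rs (fun i => / (INR (S i) * INR (S i))) n <= / m * (2 - / INR n)).
    { apply Rmult_le_compat_l. apply Rlt_le, Rinv_0_lt_compat; lra. lra. }
    unfold Rdiv. lra.
Qed.

Lemma yv_1 : yv 1 = 1.
Proof. unfold yv. replace (tree_count 1) with 1%nat by reflexivity. reflexivity. Qed.

Lemma yv_0 : yv 0 = 0.
Proof. unfold yv. replace (tree_count 0) with 0%nat by reflexivity. reflexivity. Qed.

Lemma y_growth n : (1 <= n)%nat -> yv n <= 16 ^ n / (16 * (INR n * INR n)).
Proof.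
  induction n as [n IH] using (well_founded_induction lt_wf). intros Hn.
  destruct n as [|m]; [lia|]. destruct (Nat.eq_dec m 0) as [->|Hm].
  { rewrite yv_1. simpl. lra. }
  assert (Hm1 : 1 <= INR m) by (apply (le_INR 1); lia).
  assert (HR := REC m).
  assert (Hb : forall i, (i < m)%nat -> bR (S i) <= 2 * 16 ^ S i / (16 * INR (S i))).
  { intros i Hi. unfold bR.
    transitivity (rs (fun d => / 16 * (16 ^ S d / INR (S d))) (S i)).
    - apply rs_le. intros d Hd.
      assert (HI := IH (S d) ltac:(lia) ltac:(lia)).
      assert (Hp : 0 < INR (S d)) by apply INR_S_pos.
      assert (INR (S d) * yv (S d) <= / 16 * (16 ^ S d / INR (S d))).
      { apply (Rmult_le_reg_r (INR (S d))). lra.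
        replace (/ 16 * (16 ^ S d / INR (S d)) * INR (S d)) with
                (16 ^ S d / (16 * (INR (S d) * INR (S d))) * (INR (S d) * INR (S d))) by (field; lra).
        replace (INR (S d) * yv (S d) * INR (S d)) with (yv (S d) * (INR (S d) * INR (S d))) by ring.
        apply Rmult_le_compat_r. nra. auto. }
      destruct (Nat.eqb _ 0). auto.
      assert (0 <= / 16 * (16 ^ S d / INR (S d))).
      { apply Rmult_le_pos. lra. apply Rlt_le. apply Rdiv_lt_0_compat. apply pow_lt; lra. lra. }
      lra.
    - rewrite rs_scal. assert (HG := geom_bound (S i) ltac:(lia)).
      replace (2 * 16 ^ S i / (16 * INR (S i))) with (/ 16 * (2 * 16 ^ S i / INR (S i))) by (field; apply Rgt_not_eq; apply INR_S_pos).
      apply Rmult_le_compat_l; lra. }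
  assert (Hsum : rs (fun i => bR (S i) * yv (m - i)%nat) m <=
                 16 ^ S m / 128 * rs (fun i => / (INR (S i) * (INR (m - i) * INR (m - i)))) m).
  { rewrite <- rs_scal. apply rs_le. intros i Hi.
    assert (Hy := IH (m - i)%nat ltac:(lia) ltac:(lia)).
    assert (Hj : 1 <= INR (m - i)) by (apply (le_INR 1); lia).
    assert (Hk : 0 < INR (S i)) by apply INR_S_pos.
    transitivity ((2 * 16 ^ S i / (16 * INR (S i))) * (16 ^ (m - i) / (16 * (INR (m - i) * INR (m - i))))).
    - apply Rmult_le_compat; auto using bR_nonneg, yv_nonneg.
    - replace (16 ^ S m) with (16 ^ S i * 16 ^ (m - i)) by (rewrite <- pow_add; f_equal; lia).
      right. field. lra. }
  assert (HC := conv_sum_bound m ltac:(lia)).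
  assert (H16 : 0 < 16 ^ S m) by (apply pow_lt; lra).
  assert (Hsm : INR (S m) = INR m + 1) by apply S_INR.
  assert (Hfin : INR m * yv (S m) <= 16 ^ S m / 128 * (4 / INR (S m))).
  { rewrite HR. eapply Rle_trans. apply Hsum. apply Rmult_le_compat_l. lra. auto. }
  rewrite Hsm in Hfin |- *.
  apply (Rmult_le_reg_l (INR m)). lra.
  eapply Rle_trans. apply Hfin.
  unfold Rdiv. apply (Rmult_le_reg_r (128 * (INR m + 1) * (INR m + 1))). nra.
  replace (16 ^ S m * / 128 * (4 * / (INR m + 1)) * (128 * (INR m + 1) * (INR m + 1))) with (4 * 16 ^ S m * (INR m + 1)) by (field; lra).
  replace (INR m * (16 ^ S m * / (16 * ((INR m + 1) * (INR m + 1)))) * (128 * (INR m + 1) * (INR m + 1))) with (8 * INR m * 16 ^ S m) by (field; lra).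
  nra.
Qed.

Lemma sum_n_rs f N : sum_n f N = rs f (S N).
Proof.
  rewrite sum_n_Reals. induction N; simpl. lra. rewrite IHN. simpl. lra.
Qed.

Lemma Cmod_rs (a : nat -> C) N :
  Cmod (rs (fun n => Re (a n)) N, rs (fun n => Im (a n)) N) <= rs (fun n => Cmod (a n)) N.
Proof.
  induction N; simpl.
  - change (0, 0) with (RtoC 0). rewrite Cmod_0. lra.
  - replace (rs (fun n => Re (a n)) N + Re (a N), rs (fun n => Im (a n)) N + Im (a N))
      with (Cplus (rs (fun n => Re (a n)) N, rs (fun n => Im (a n)) N) (a N)).
    eapply Rle_trans. apply Cmod_triangle. lra.
    destruct (a N); reflexivity.
Qed.

Lemma Cmod_sqr (c : C) : Cmod c * Cmod c = Re c * Re c + Im c * Im c.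
Proof. assert (H := Cmod2_alt c). simpl in H. lra. Qed.

Lemma csum_bound (a : nat -> C) : ex_series (fun n => Cmod (a n)) ->
  ex_series (fun n => Re (a n)) /\ ex_series (fun n => Im (a n)) /\
  Cmod (csum a) <= Series (fun n => Cmod (a n)).
Proof.
  intros H.
  assert (HR : ex_series (fun n => Re (a n))).
  { apply (ex_series_le (fun n => Re (a n)) (fun n => Cmod (a n))); auto. intros n. apply re_le_Cmod. }
  assert (HI : ex_series (fun n => Im (a n))).
  { apply (ex_series_le (fun n => Im (a n)) (fun n => Cmod (a n))); auto. intros n.
    change (norm (Im (a n))) with (Rabs (Im (a n))). eapply Rle_trans; [apply Rmax_r|apply Rmax_Cmod]. }
  split; auto. split; auto.
  apply Series_correct in HR. apply Series_correct in HI. apply Series_correct in H.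
  unfold csum. set (P := Series (fun n => Re (a n))) in *. set (Q := Series (fun n => Im (a n))) in *.
  set (T := Series (fun n => Cmod (a n))) in *.
  assert (HT : 0 <= T).
  { assert (Hl := is_lim_seq_le (fun _ => 0) (sum_n (fun n => Cmod (a n))) 0 T). simpl in Hl. apply Hl.
    intros N. rewrite sum_n_rs. apply rs_nonneg. intros; apply Cmod_ge_0. apply is_lim_seq_const. exact H. }
  assert (Hle : Rbar_le (P * P + Q * Q) (T * T)).
  { apply (is_lim_seq_le (fun N => sum_n (fun n => Re (a n)) N * sum_n (fun n => Re (a n)) N + sum_n (fun n => Im (a n)) N * sum_n (fun n => Im (a n)) N)
      (fun N => sum_n (fun n => Cmod (a n)) N * sum_n (fun n => Cmod (a n)) N)).
    - intros N. rewrite !sum_n_rs. assert (E := Cmod_sqr (rs (fun n => Re (a n)) (S N), rs (fun n => Im (a n)) (S N))). cbn [Re Im fst snd] in E. rewrite <- E.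
      assert (H1 := Cmod_rs a (S N)). assert (H2 := Cmod_ge_0 (rs (fun n => Re (a n)) (S N), rs (fun n => Im (a n)) (S N))).
      apply Rmult_le_compat; auto.
    - apply (is_lim_seq_plus' _ _ (P*P) (Q*Q)); apply is_lim_seq_mult'; auto.
    - apply is_lim_seq_mult'; auto. }
  simpl in Hle.
  assert (Cmod (P, Q) * Cmod (P, Q) <= T * T) by (rewrite Cmod_sqr; simpl; lra).
  assert (HH0 := Cmod_ge_0 (P, Q)). nra.
Qed.

Lemma csum_plus (a b : nat -> C) :
  ex_series (fun n => Re (a n)) -> ex_series (fun n => Im (a n)) ->
  ex_series (fun n => Re (b n)) -> ex_series (fun n => Im (b n)) ->
  csum (fun n => Cplus (a n) (b n)) = Cplus (csum a) (csum b).
Proof.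
  intros H1 H2 H3 H4.
  transitivity ((Series (fun n => Re (a n)) + Series (fun n => Re (b n)), Series (fun n => Im (a n)) + Series (fun n => Im (b n)))).
  - unfold csum. f_equal; rewrite <- Series_plus; auto; apply Series_ext; intros n; destruct (a n), (b n); reflexivity.
  - reflexivity.
Qed.

Lemma csum_ext (a b : nat -> C) : (forall n, a n = b n) -> csum a = csum b.
Proof. intros H. unfold csum. f_equal; apply Series_ext; intros; rewrite H; auto. Qed.

Lemma Cexp_add a b : Cexp (Cplus a b) = Cmult (Cexp a) (Cexp b).
Proof.
  unfold Cexp, Cplus, Cmult. destruct a as [x y]; destruct b as [u v]; simpl.
  rewrite exp_plus, cos_plus, sin_plus. f_equal; ring.
Qed.

Lemma Cmod_Cexp a : Cmod (Cexp a) = exp (Re a).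
Proof.
  unfold Cmod, Cexp. cbn [fst snd].
  assert (E : (exp (Re a) * cos (Im a)) ^ 2 + (exp (Re a) * sin (Im a)) ^ 2 = exp (Re a) ^ 2).
  { assert (H := sin2_cos2 (Im a)). unfold Rsqr in H. simpl. nra. }
  rewrite E. apply sqrt_pow2. apply Rlt_le, exp_pos.
Qed.

Lemma Cexp_0 : Cexp (RtoC 0) = RtoC 1.
Proof. unfold Cexp, RtoC. simpl. rewrite exp_0, cos_0, sin_0. f_equal; ring. Qed.

Lemma sin_sq_le t : sin t * sin t <= t * t.
Proof.
  assert (Hp : forall t, 0 <= t -> sin t * sin t <= t * t).
  { intros s Hs. destruct (Req_dec s 0) as [->|Hs0]. rewrite sin_0; lra.
    assert (H1 : sin s < s) by (apply sin_lt_x; lra).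
    destruct (Rle_dec 0 (sin s)). nra.
    assert (H2 := SIN_bound s).
    destruct (Rle_dec s 1). 
    - assert (0 <= sin s); [|lra]. apply sin_ge_0; try lra. assert (H3 := PI2_1). lra.
    - nra. }
  destruct (Rle_dec 0 t). auto. replace (sin t * sin t) with (sin (-t) * sin (-t)) by (rewrite sin_neg; ring).
  replace (t * t) with ((-t) * (-t)) by ring. apply Hp. lra.
Qed.

Lemma one_minus_cos y : 1 - cos y <= y * y / 2.
Proof.
  replace y with (2 * (y / 2)) at 1 by field. rewrite cos_2a_sin.
  assert (H := sin_sq_le (y / 2)). lra.
Qed.

Lemma exp_m1_bound x : Rabs (exp x - 1) <= Rabs x * Rmax 1 (exp x).
Proof.
  destruct (Rle_dec 0 x).
  - rewrite Rmax_right. 2: { assert (H:= exp_ineq1_le x). lra. }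
    rewrite !Rabs_right. 2: lra. 2: { assert (H:= exp_ineq1_le x). lra. }
    assert (H := exp_ineq1_le (- x)). rewrite exp_Ropp in H.
    assert (Hp := exp_pos x).
    assert (x * exp x >= exp x - 1); [|lra].
    apply Rle_ge. apply (Rmult_le_reg_r (/ exp x)). apply Rinv_0_lt_compat; lra.
    replace (x * exp x * / exp x) with x by (field; lra).
    replace ((exp x - 1) * / exp x) with (1 - / exp x) by (field; lra). lra.
  - rewrite Rmax_left. 2: { left. rewrite <- exp_0. apply exp_increasing. lra. }
    assert (H := exp_ineq1_le x). assert (exp x < 1) by (rewrite <- exp_0; apply exp_increasing; lra).
    rewrite Rabs_left by lra. rewrite Rabs_left by lra. lra.
Qed.

Lemma Cexp_m1 a : Cmod (Cminus (Cexp a) (RtoC 1)) <= Cmod a * Rmax 1 (exp (Re a)).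
Proof.
  destruct a as [x y]. unfold Cexp, Cminus, Cplus, Copp, RtoC. simpl.
  set (m := Rmax 1 (exp x)).
  assert (Hm1 : 1 <= m) by apply Rmax_l. assert (Hme : exp x <= m) by apply Rmax_r.
  assert (Hep := exp_pos x).
  apply Rsqr_incr_0_var. 2: { apply Rmult_le_pos. apply Cmod_ge_0. lra. }
  unfold Rsqr. rewrite Rmult_comm with (r1 := Cmod (x,y)).
  replace (m * Cmod (x, y) * (m * Cmod (x, y))) with (m * m * (Cmod (x,y) * Cmod (x,y))) by ring.
  rewrite !Cmod_sqr. simpl.
  assert (E : (exp x * cos y + - (1)) * (exp x * cos y + - (1)) + (exp x * sin y + - 0) * (exp x * sin y + - 0)
             = (exp x - 1) * (exp x - 1) + 2 * exp x * (1 - cos y)).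
  { assert (H := sin2_cos2 y). unfold Rsqr in H. nra. }
  rewrite E.
  assert (H1 := exp_m1_bound x). fold m in H1.
  assert (H1' : (exp x - 1) * (exp x - 1) <= x * x * (m * m)).
  { assert (Rabs (exp x - 1) * Rabs (exp x - 1) <= (Rabs x * m) * (Rabs x * m)).
    { apply Rmult_le_compat; try apply Rabs_pos; exact H1. }
    assert (Ea : Rabs (exp x - 1) * Rabs (exp x - 1) = (exp x - 1) * (exp x - 1)) by (rewrite <- Rabs_mult; apply Rabs_right; apply Rle_ge, Rle_0_sqr).
    assert (Ex : Rabs x * Rabs x = x * x) by (rewrite <- Rabs_mult; apply Rabs_right; apply Rle_ge, Rle_0_sqr).
    nra. }
  assert (H2 := one_minus_cos y).
  assert (0 <= 1 - cos y) by (assert (H := COS_bound y); lra).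
  assert (2 * exp x * (1 - cos y) <= m * m * (y * y)).
  { apply Rle_trans with (2 * m * (y * y / 2)). apply Rmult_le_compat; try nra. nra. }
  nra.
Qed.

Lemma rs_mono f n m : (forall i, 0 <= f i) -> (n <= m)%nat -> rs f n <= rs f m.
Proof.
  intros H Hnm. induction Hnm. lra. simpl. specialize (H m). lra.
Qed.

Lemma rs_ge_term f n k : (forall i, 0 <= f i) -> (k < n)%nat -> f k <= rs f n.
Proof.
  intros H Hk. apply Rle_trans with (rs f (S k)). simpl. assert (0 <= rs f k) by (apply rs_nonneg; auto). lra.
  apply rs_mono; auto.
Qed.

Lemma ex_series_bounded (a : nat -> R) B :
  (forall n, 0 <= a n) -> (forall N, rs a N <= B) -> ex_series a /\ Series a <= B.
Proof.
  intros Hpos HB.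
  assert (Hinc : forall n, sum_n a n <= sum_n a (S n)).
  { intros n. rewrite !sum_n_rs. simpl. specialize (Hpos (S n)). lra. }
  assert (Hl := Lim_seq_correct _ (ex_lim_seq_incr _ Hinc)).
  set (l := Lim_seq (sum_n a)) in *.
  assert (Hle : Rbar_le l B).
  { apply (is_lim_seq_le (sum_n a) (fun _ => B) l B); auto. intros n. rewrite sum_n_rs. auto. apply is_lim_seq_const. }
  assert (Hge : Rbar_le (sum_n a 0) l).
  { apply (is_lim_seq_le (fun _ => sum_n a 0) (sum_n a) _ l); auto. intros n. clear -Hinc. induction n. lra. eapply Rle_trans; eauto. apply is_lim_seq_const. }
  destruct l as [l| |]; simpl in Hle, Hge; try tauto.
  split. exists l. exact Hl. rewrite (is_series_unique a l Hl). auto.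
Qed.

Lemma partial_le_Series (a : nat -> R) : (forall n, 0 <= a n) -> ex_series a -> forall N, rs a N <= Series a.
Proof.
  intros Hpos Hex N.
  assert (Hinc : forall n, sum_n a n <= sum_n a (S n)).
  { intros n. rewrite !sum_n_rs. simpl. specialize (Hpos (S n)). lra. }
  apply Rle_trans with (sum_n a N). rewrite sum_n_rs. apply rs_mono; auto.
  apply (is_lim_seq_incr_compare (sum_n a)); auto. apply Series_correct. auto.
Qed.

Lemma term_le_Series (a : nat -> R) : (forall n, 0 <= a n) -> ex_series a -> forall n, a n <= Series a.
Proof.
  intros Hpos Hex n. eapply Rle_trans; [|apply partial_le_Series; eauto]. apply (rs_ge_term a (S n) n); auto.
Qed.

Lemma Series_nonneg (a : nat -> R) : (forall n, 0 <= a n) -> ex_series a -> 0 <= Series a.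
Proof. intros. eapply Rle_trans; [|apply (partial_le_Series a H H0 0)]. simpl; lra. Qed.

Lemma yv_ge1 n : (1 <= n)%nat -> 1 <= yv n.
Proof.
  intros Hn. induction Hn. rewrite yv_1; lra.
  assert (HR := REC m). 
  assert (Hm : 0 < INR m) by (apply lt_0_INR; lia).
  assert (H1 : bR m * yv 1 <= rs (fun i => bR (S i) * yv (m - i)%nat) m).
  { assert (E : bR m * yv 1 = (fun i => bR (S i) * yv (m - i)%nat) (m - 1)%nat).
    { cbv beta. replace (S (m - 1)) with m by lia. replace (m - (m - 1))%nat with 1%nat by lia. reflexivity. }
    rewrite E. apply (rs_ge_term (fun i => bR (S i) * yv (m - i)%nat)). intros; apply Rmult_le_pos; auto using bR_nonneg, yv_nonneg. lia. }
  assert (H2 : INR m * yv m <= bR m).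
  { unfold bR. assert (E : INR m * yv m = (fun d => if Nat.eqb (m mod S d) 0 then INR (S d) * yv (S d) else 0) (m - 1)%nat).
    { cbv beta. replace (S (m - 1)) with m by lia. rewrite Nat.Div0.mod_same. reflexivity. }
    rewrite E. apply (rs_ge_term (fun d => if Nat.eqb (m mod S d) 0 then INR (S d) * yv (S d) else 0)). intros i. destruct (Nat.eqb _ 0). apply Rmult_le_pos; auto using pos_INR, yv_nonneg. lra. lia. }
  rewrite yv_1 in H1. nra.
Qed.

Lemma Rad_le_1 : Rbar_le (CV_radius yv) 1.
Proof.
  destruct (Rbar_le_lt_dec (CV_radius yv) 1) as [H|H]; auto. exfalso.
  assert (H1 : Rbar_lt (Rabs 1) (CV_radius yv)) by (rewrite Rabs_R1; auto).
  apply CV_disk_inside in H1. apply ex_series_lim_0 in H1.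
  apply is_lim_seq_incr_1 in H1.
  assert (Hle : forall n, 1 <= Rabs (yv (S n) * 1 ^ S n)).
  { intros n. rewrite pow1, Rmult_1_r, Rabs_right. apply yv_ge1; lia. apply Rle_ge, yv_nonneg. }
  assert (Hl := is_lim_seq_le (fun _ => 1) _ 1 0 Hle (is_lim_seq_const 1) H1).
  simpl in Hl. lra.
Qed.

Lemma Rad_ge : Rbar_le (1/16) (CV_radius yv).
Proof.
  destruct (CV_radius_bounded yv) as [Hub _]. apply Hub.
  exists 1. intros n. destruct n as [|n]. rewrite yv_0. rewrite Rmult_0_l, Rabs_R0. lra.
  assert (H := y_growth (S n) ltac:(lia)).
  rewrite Rabs_right. 2: { apply Rle_ge, Rmult_le_pos. apply yv_nonneg. apply pow_le; lra. }
  assert (Hp : 0 < (1/16) ^ S n) by (apply pow_lt; lra).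
  assert (Hs : 1 <= INR (S n)) by (apply (le_INR 1); lia).
  apply Rle_trans with (16 ^ S n / (16 * (INR (S n) * INR (S n))) * (1/16) ^ S n).
  apply Rmult_le_compat_r; lra.
  assert (E : 16 ^ S n * (1/16) ^ S n = 1).
  { rewrite <- Rpow_mult_distr. replace (16 * (1/16)) with 1 by field. apply pow1. }
  replace (16 ^ S n / (16 * (INR (S n) * INR (S n))) * (1/16) ^ S n) with (16 ^ S n * (1/16) ^ S n / (16 * (INR (S n) * INR (S n)))) by (field; nra).
  rewrite E. unfold Rdiv. rewrite Rmult_1_l. rewrite <- Rinv_1. apply Rinv_le_contravar. lra. nra.
Qed.

Lemma rho_eq : CV_radius yv = Finite rho.
Proof.
  assert (H1 := Rad_le_1). assert (H2 := Rad_ge). unfold rho. change (fun n => INR (tree_count n)) with yv.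
  destruct (CV_radius yv); simpl in *; tauto.
Qed.

Lemma rho_bounds : 1/16 <= rho <= 1.
Proof.
  assert (H1 := Rad_le_1). assert (H2 := Rad_ge). rewrite rho_eq in H1, H2. simpl in *. lra.
Qed.

Definition Y (s : R) : R := Series (fun n => yv n * s ^ n).

Lemma ex_Y s : 0 <= s < rho -> ex_series (fun n => yv n * s ^ n).
Proof.
  intros Hs. assert (H : Rbar_lt (Rabs s) (CV_radius yv)) by (rewrite rho_eq, Rabs_right; simpl; lra).
  apply CV_disk_inside in H. eapply ex_series_ext; [|exact H].
  intros n. simpl. apply Rabs_right. apply Rle_ge, Rmult_le_pos. apply yv_nonneg. apply pow_le; lra.
Qed.

Lemma Y_nonneg s : 0 <= s < rho -> 0 <= Y s.
Proof. intros Hs. apply Series_nonneg. intros; apply Rmult_le_pos; [apply yv_nonneg|apply pow_le; lra]. apply ex_Y; auto. Qed.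

Lemma pow_le1 s k : 0 <= s <= 1 -> s ^ k <= 1.
Proof. intros Hs. induction k; simpl. lra. assert (0 <= s ^ k) by (apply pow_le; lra). nra. Qed.

Lemma pow_le_base_le1 s a b : 0 <= s <= 1 -> (b <= a)%nat -> s ^ a <= s ^ b.
Proof.
  intros Hs Hab. replace a with (b + (a - b))%nat by lia. rewrite pow_add.
  rewrite <- (Rmult_1_r (s ^ b)) at 2. apply Rmult_le_compat_l. apply pow_le; lra.
  apply pow_le1; lra. Qed.

Lemma rho_le_1 : rho <= 1.
Proof. apply rho_bounds. Qed.
Lemma rho_pos : 0 < rho.
Proof. assert (H := rho_bounds). lra. Qed.

Lemma ex_Yscal s c : 0 <= s < rho -> ex_series (fun n => c * (yv n * s ^ n)).
Proof. intros Hs. exact (ex_series_scal_l c _ (ex_Y s Hs)). Qed.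

Lemma Y_pow_le s i : 0 <= s < rho -> Y (s ^ S i) <= s ^ i * Y s.
Proof.
  intros Hs. assert (H1 := rho_le_1). unfold Y. rewrite <- Series_scal_l.
  apply Series_le. 2: apply ex_Yscal; auto.
  intros n. split. apply Rmult_le_pos. apply yv_nonneg. apply pow_le, pow_le; lra.
  destruct n as [|n]. rewrite yv_0. lra.
  replace (s ^ i * (yv (S n) * s ^ S n)) with (yv (S n) * s ^ (i + S n)) by (rewrite pow_add; ring).
  apply Rmult_le_compat_l. apply yv_nonneg. rewrite <- pow_mult.
  apply pow_le_base_le1. lra. nia.
Qed.

Lemma Y_ratio s t : 0 <= s <= t -> t < rho -> 0 < t -> Y s <= s / t * Y t.
Proof.
  intros Hs Ht Ht0. unfold Y. rewrite <- Series_scal_l.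
  apply Series_le. 2: apply ex_Yscal; lra.
  intros n. split. apply Rmult_le_pos. apply yv_nonneg. apply pow_le; lra.
  destruct n as [|n]. rewrite yv_0. lra.
  rewrite <- Rmult_assoc, (Rmult_comm (s / t)), Rmult_assoc. apply Rmult_le_compat_l. apply yv_nonneg.
  replace (s ^ S n) with ((s / t) ^ S n * t ^ S n).
  2: { rewrite <- Rpow_mult_distr. f_equal. field. lra. }
  apply Rmult_le_compat_r. apply pow_le; lra.
  rewrite <- (pow_1 (s / t)) at 2. apply pow_le_base_le1. split. apply Rmult_le_pos; [lra|apply Rlt_le, Rinv_0_lt_compat; lra].
  apply (Rmult_le_reg_r t); auto. unfold Rdiv. rewrite Rmult_assoc, Rinv_l; lra. lia.
Qed.

Lemma Y_mono s t : 0 <= s <= t -> t < rho -> Y s <= Y t.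
Proof.
  intros Hs Ht. destruct (Req_dec t 0). subst. replace s with 0 by lra. lra.
  eapply Rle_trans. apply Y_ratio; eauto. lra.
  rewrite <- (Rmult_1_l (Y t)) at 2. apply Rmult_le_compat_r. apply Y_nonneg; lra.
  apply (Rmult_le_reg_r t). lra. unfold Rdiv. rewrite Rmult_assoc, Rinv_l; lra.
Qed.

Lemma rs_geom_le s N : 0 <= s < 1 -> rs (fun j => s ^ j) N <= / (1 - s).
Proof.
  intros Hs. rewrite <- Series_geom by (rewrite Rabs_right; lra).
  apply partial_le_Series. intros; apply pow_le; lra. apply ex_series_geom. rewrite Rabs_right; lra.
Qed.

Lemma div_swap (H : nat -> nat -> R) N :
  rs (fun n => rs (fun e => if Nat.eqb (n mod S e) 0 then H (S e) (n / S e)%nat else 0) n) (S N)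
  = rs (fun e => rs (fun j => if Nat.leb (S e * S j) N then H (S e) (S j) else 0) N) N.
Proof.
  induction N.
  - simpl. lra.
  - change (rs (fun n => rs (fun e => if Nat.eqb (n mod S e) 0 then H (S e) (n / S e)%nat else 0) n) (S (S N)))
      with (rs (fun n => rs (fun e => if Nat.eqb (n mod S e) 0 then H (S e) (n / S e)%nat else 0) n) (S N)
            + rs (fun e => if Nat.eqb (S N mod S e) 0 then H (S e) (S N / S e)%nat else 0) (S N)).
    rewrite IHN.
    assert (A : rs (fun e => rs (fun j => if Nat.leb (S e * S j) N then H (S e) (S j) else 0) N) N =
                rs (fun e => rs (fun j => if Nat.leb (S e * S j) N then H (S e) (S j) else 0) (S N)) (S N)).
    { assert (A1 : forall e, rs (fun j => if Nat.leb (S e * S j) N then H (S e) (S j) else 0) (S N) =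
                             rs (fun j => if Nat.leb (S e * S j) N then H (S e) (S j) else 0) N).
      { intros e. cbn [rs]. destruct (Nat.leb_spec (S e * S N) N); [nia|]. lra. }
      rewrite (rs_ext _ _ (S N) (fun e _ => A1 e)). cbn [rs].
      rewrite (rs_ext (fun j => if Nat.leb (S N * S j) N then H (S N) (S j) else 0) (fun _ => 0)).
      rewrite rs_zero. lra.
      intros j _. destruct (Nat.leb_spec (S N * S j) N); [nia|]. auto. }
    rewrite A. rewrite <- rs_plus. apply rs_ext. intros e He. symmetry.
    transitivity (rs (fun j => (if Nat.leb (S e * S j) N then H (S e) (S j) else 0) + (if Nat.eqb (S e * S j) (S N) then H (S e) (S j) else 0)) (S N)).
    + apply rs_ext. intros j Hj. destruct (Nat.leb_spec (S e * S j) (S N)); destruct (Nat.leb_spec (S e * S j) N); destruct (Nat.eqb_spec (S e * S j) (S N)); try lia; lra.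
    + rewrite rs_plus. f_equal.
      destruct (Nat.eqb_spec (S N mod S e) 0) as [Hd|Hd].
      * apply Nat.Div0.div_exact in Hd. set (q := (S N / S e)%nat) in *.
        assert (Hq : (1 <= q <= S N)%nat) by nia.
        rewrite (rs_ext _ (fun j => if Nat.eqb j (q - 1) then H (S e) (S j) else 0)).
        rewrite rs_single. destruct (Nat.ltb_spec (q - 1) (S N)); [|lia]. f_equal. lia.
        intros j Hj. destruct (Nat.eqb_spec (S e * S j) (S N)); destruct (Nat.eqb_spec j (q - 1)); try nia; auto.
      * rewrite (rs_ext _ (fun _ => 0)). apply rs_zero.
        intros j Hj. destruct (Nat.eqb_spec (S e * S j) (S N)); auto. exfalso. apply Hd.
        rewrite <- e0. rewrite Nat.mul_comm. apply Nat.Div0.mod_mul.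
Qed.

Definition cc (n : nat) : R := if Nat.eqb n 0 then 0 else bR n / INR n.

Lemma cc_nonneg n : 0 <= cc n.
Proof. unfold cc. destruct (Nat.eqb_spec n 0). lra. apply Rmult_le_pos. apply bR_nonneg. apply Rlt_le, Rinv_0_lt_compat, lt_0_INR; lia. Qed.

Lemma cc_expand (phi : nat -> R) n : cc n * phi n =
  rs (fun e => if Nat.eqb (n mod S e) 0 then yv (S e) * phi (S (n / S e - 1) * S e)%nat / INR (S (n / S e - 1)) else 0) n.
Proof.
  unfold cc. destruct (Nat.eqb_spec n 0). subst. simpl. lra.
  unfold bR. unfold Rdiv. rewrite Rmult_assoc, Rmult_comm. rewrite <- rs_scal. apply rs_ext.
  intros e He. destruct (Nat.eqb_spec (n mod S e) 0) as [Hd|Hd]; [|lra].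
  apply Nat.Div0.div_exact in Hd. set (q := (n / S e)%nat) in *.
  assert (Hq : (1 <= q)%nat) by nia. replace (S (q - 1)) with q by lia.
  rewrite (Nat.mul_comm q (S e)), <- Hd. replace (INR n) with (INR (S e) * INR q) by (rewrite <- mult_INR; f_equal; auto).
  field. split; apply Rgt_not_eq; apply lt_0_INR; lia.
Qed.

Lemma cc_partial (phi : nat -> R) N :
  rs (fun n => cc n * phi n) (S N) =
  rs (fun j => rs (fun e => if Nat.leb (S e * S j) N then yv (S e) * phi (S j * S e)%nat / INR (S j) else 0) N) N.
Proof.
  rewrite (rs_ext _ _ _ (fun n _ => cc_expand phi n)).
  rewrite (div_swap (fun d i => yv d * phi (S (i - 1) * d)%nat / INR (S (i - 1)))).
  rewrite rs_switch. apply rs_ext. intros j _. apply rs_ext. intros e _.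
  destruct (Nat.leb _ _); auto. replace (S j - 1)%nat with j by lia. reflexivity.
Qed.

Lemma sum_f_rs f n : sum_f_R0 f n = rs f (S n).
Proof. rewrite <- sum_n_Reals. apply sum_n_rs. Qed.

Lemma inv_INR_S_le1 j : / INR (S j) <= 1.
Proof. rewrite <- Rinv_1. apply Rinv_le_contravar. lra. apply (le_INR 1); lia. Qed.

Lemma inv_INR_S_pos j : 0 < / INR (S j).
Proof. apply Rinv_0_lt_compat, INR_S_pos. Qed.

Lemma partial_Y_le w N : 0 <= w < rho -> rs (fun e => yv (S e) * w ^ S e) N <= Y w.
Proof.
  intros Hw. apply Rle_trans with (rs (fun d => yv d * w ^ d) (S N)).
  rewrite rs_shift_l. rewrite yv_0. lra.
  apply partial_le_Series. intros; apply Rmult_le_pos; [apply yv_nonneg|apply pow_le; lra]. apply ex_Y; auto.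
Qed.

Lemma cc_ex s : 0 <= s < rho -> ex_series (fun n => cc n * s ^ n) /\ Series (fun n => cc n * s ^ n) <= Y s / (1 - s).
Proof.
  intros Hs. assert (Hr := rho_bounds). assert (Hs1 : s < 1) by lra.
  assert (HY := Y_nonneg s Hs).
  apply ex_series_bounded. intros; apply Rmult_le_pos; [apply cc_nonneg|apply pow_le; lra].
  intros [|N]. simpl. apply Rmult_le_pos; auto. apply Rlt_le, Rinv_0_lt_compat; lra.
  rewrite cc_partial.
  apply Rle_trans with (rs (fun j => s ^ j * Y s) N).
  - apply rs_le. intros j Hj. eapply Rle_trans. 2: apply (Y_pow_le s j Hs).
    assert (Hw : 0 <= s ^ S j < rho).
    { split. apply pow_le; lra. eapply Rle_lt_trans; [|apply Hs]. simpl. assert (s ^ j <= 1) by (apply pow_le1; lra). nra. }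
    eapply Rle_trans. 2: apply (partial_Y_le (s ^ S j) N Hw).
    apply rs_le. intros e He. destruct (Nat.leb _ _).
    + rewrite <- pow_mult. unfold Rdiv. rewrite <- (Rmult_1_r (yv (S e) * s ^ (S j * S e))) at 2.
      apply Rmult_le_compat_l. apply Rmult_le_pos; [apply yv_nonneg|apply pow_le; lra]. apply inv_INR_S_le1.
    + apply Rmult_le_pos; [apply yv_nonneg|apply pow_le, pow_le; lra].
  - rewrite (rs_ext _ (fun j => Y s * s ^ j)) by (intros; ring). rewrite rs_scal.
    unfold Rdiv. apply Rmult_le_compat_l; auto. apply rs_geom_le. lra.
Qed.

Lemma pow_small m k : 0 <= m < rho -> 0 <= m ^ S k < rho.
Proof.
  intros Hm. assert (Hr := rho_bounds). split. apply pow_le; lra.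
  eapply Rle_lt_trans; [|apply Hm]. simpl. assert (m ^ k <= 1) by (apply pow_le1; lra). nra.
Qed.

Lemma inner_div j N (F : nat -> R) : F O = 0 ->
  rs (fun e => if Nat.leb (S e * S j) N then F (S e) else 0) N = rs F (S (N / S j)).
Proof.
  intros HF0. set (D := (N / S j)%nat).
  assert (HD : (D <= N)%nat) by (apply Nat.Div0.div_le_upper_bound; nia).
  transitivity (rs (fun e => if Nat.leb (S e * S j) N then F (S e) else 0) (D + (N - D))).
  { f_equal. lia. }
  rewrite rs_split.
  rewrite (rs_ext (fun l => if Nat.leb (S (D + l) * S j) N then F (S (D + l)) else 0) (fun _ => 0)).
  rewrite rs_zero, Rplus_0_r. rewrite rs_shift_l, HF0, Rplus_0_l. apply rs_ext.
  - intros e He. destruct (Nat.leb_spec (S e * S j) N); auto. exfalso.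
    assert (H1 := Nat.div_mod_eq N (S j)). assert (H2 := Nat.mod_upper_bound N (S j) ltac:(lia)).
    fold D in H1. nia.
  - intros l _. destruct (Nat.leb_spec (S (D + l) * S j) N); auto. exfalso.
    assert (H1 := Nat.mul_succ_div_gt N (S j) ltac:(lia)). fold D in H1. nia.
Qed.

Section Swap.
Variable phi : nat -> R.
Variable m : R.
Hypothesis Hm : 0 <= m < rho.
Hypothesis Hphi : forall n, Rabs (phi n) <= m ^ n.

Let s := (m + rho) / 2.
Let q := m / s.

Lemma s_facts : 0 < s /\ m < s /\ s < rho /\ s < 1 /\ 0 <= q < 1 /\ m = q * s.
Proof.
  assert (Hr := rho_bounds). unfold q, s. repeat split; try lra.
  apply Rmult_le_pos; [lra|]. apply Rlt_le, Rinv_0_lt_compat; lra.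
  apply (Rmult_lt_reg_r ((m + rho) / 2)). lra. unfold Rdiv. rewrite Rmult_assoc, Rinv_l; lra.
  field. lra.
Qed.

Definition Tj (j : nat) : R := Series (fun d => yv d * phi (S j * d)%nat).

Lemma Fj_abs_bound j d : Rabs (yv d * phi (S j * d)%nat) <= yv d * (m ^ S j) ^ d.
Proof.
  rewrite Rabs_mult, Rabs_right by (apply Rle_ge, yv_nonneg). apply Rmult_le_compat_l. apply yv_nonneg.
  rewrite <- pow_mult. apply Hphi.
Qed.

Lemma Fj_ex j : ex_series (fun d => Rabs (yv d * phi (S j * d)%nat)).
Proof.
  apply (ex_series_le (fun d => Rabs (yv d * phi (S j * d)%nat)) (fun d => yv d * (m ^ S j) ^ d)).
  intros d. change (norm (Rabs (yv d * phi (S j * d)%nat))) with (Rabs (Rabs (yv d * phi (S j * d)%nat))).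
  rewrite Rabs_Rabsolu. apply Fj_abs_bound. apply ex_Y. apply pow_small; auto.
Qed.

Lemma Tj_bound j : Rabs (Tj j) <= m ^ j * Y m.
Proof.
  unfold Tj. eapply Rle_trans. apply Series_Rabs. apply Fj_ex.
  eapply Rle_trans. 2: apply (Y_pow_le m j Hm).
  apply Series_le. intros d; split. apply Rabs_pos. apply Fj_abs_bound. apply ex_Y, pow_small; auto.
Qed.

Lemma L_ex : ex_series (fun j => Tj j / INR (S j)).
Proof.
  apply (ex_series_le (fun j => Tj j / INR (S j)) (fun j => Y m * m ^ j)).
  intros j. change (norm (Tj j / INR (S j))) with (Rabs (Tj j / INR (S j))).
  unfold Rdiv. rewrite Rabs_mult. rewrite (Rabs_right (/ _)) by (apply Rle_ge, Rlt_le, inv_INR_S_pos).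
  rewrite (Rmult_comm (Y m)). apply Rle_trans with (Rabs (Tj j) * 1).
  apply Rmult_le_compat_l. apply Rabs_pos. apply inv_INR_S_le1. rewrite Rmult_1_r. apply Tj_bound.
  assert (Hg : ex_series (fun j => m ^ j)) by (apply ex_series_geom; assert (Hr := rho_bounds); rewrite Rabs_right; lra).
  exact (ex_series_scal_l (Y m) _ Hg).
Qed.

Lemma tail_bound j N :
  Rabs (rs (fun d => yv d * phi (S j * d)%nat) (S (N / S j)) - Tj j) <= q ^ N * s ^ j * Y s.
Proof.
  destruct s_facts as (Hs0 & Hms & Hsr & Hs1 & Hq & Hmq).
  set (D := (N / S j)%nat). set (F := fun d => yv d * phi (S j * d)%nat).
  assert (HFex : ex_series F).
  { apply ex_series_Rabs. apply Fj_ex. }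
  unfold Tj. fold F. rewrite (Series_incr_n F (S D)) by (lia || auto). simpl pred. rewrite sum_f_rs.
  replace (rs F (S D) - (rs F (S D) + Series (fun k => F (S D + k)%nat))) with (- Series (fun k => F (S D + k)%nat)) by ring.
  rewrite Rabs_Ropp.
  assert (Hex2 : ex_series (fun k => Rabs (F (S D + k)%nat))).
  { apply (ex_series_incr_n (fun k => Rabs (F k)) (S D)). apply Fj_ex. }
  eapply Rle_trans. apply Series_Rabs. auto.
  assert (HYs := ex_Y s ltac:(lra)).
  assert (Hex3 : ex_series (fun k => yv (S D + k) * s ^ (S D + k))).
  { apply (ex_series_incr_n (fun k => yv k * s ^ k) (S D)). auto. }
  apply Rle_trans with (Series (fun k => q ^ N * s ^ j * (yv (S D + k) * s ^ (S D + k)))).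
  - apply Series_le. 2: { exact (ex_series_scal_l (q ^ N * s ^ j) _ Hex3). }
    intros k. split. apply Rabs_pos. unfold F.
    eapply Rle_trans. apply Fj_abs_bound. rewrite <- pow_mult.
    set (d := (S D + k)%nat). set (E := (S j * d)%nat).
    assert (HE1 : (N <= E)%nat).
    { assert (H1 := Nat.mul_succ_div_gt N (S j) ltac:(lia)). fold D in H1. unfold E, d. nia. }
    assert (HE2 : (j + d <= E)%nat) by (unfold E, d; nia).
    rewrite Rmult_comm. rewrite (Rmult_comm (yv d)), <- Rmult_assoc. apply Rmult_le_compat_r. apply yv_nonneg.
    rewrite Hmq, Rpow_mult_distr.
    apply Rle_trans with (q ^ N * s ^ E). apply Rmult_le_compat_r. apply pow_le; lra. apply pow_le_base_le1; lra || lia.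
    rewrite Rmult_assoc. apply Rmult_le_compat_l. apply pow_le; lra. rewrite <- pow_add. apply pow_le_base_le1; lra || lia.
  - rewrite Series_scal_l. apply Rmult_le_compat_l. apply Rmult_le_pos; apply pow_le; lra.
    unfold Y. rewrite (Series_incr_n (fun n => yv n * s ^ n) (S D)) by (lia || auto).
    assert (0 <= sum_f_R0 (fun n => yv n * s ^ n) (pred (S D))).
    { rewrite sum_f_rs. apply rs_nonneg. intros; apply Rmult_le_pos; [apply yv_nonneg|apply pow_le; lra]. }
    lra.
Qed.

Lemma rs_abs f n : Rabs (rs f n) <= rs (fun i => Rabs (f i)) n.
Proof. induction n; simpl. rewrite Rabs_R0; lra. eapply Rle_trans. apply Rabs_triang. lra. Qed.

Theorem swap_series : is_series (fun n => cc n * phi n) (Series (fun j => Tj j / INR (S j))).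
Proof.
  destruct s_facts as (Hs0 & Hms & Hsr & Hs1 & Hq & Hmq).
  set (L := Series (fun j => Tj j / INR (S j))).
  set (eps := fun N => q ^ N * (Y s / (1 - s))).
  set (B := fun N => rs (fun j => Tj j / INR (S j)) N).
  assert (HYs := Y_nonneg s ltac:(lra)).
  assert (HB : is_lim_seq B L).
  { apply is_lim_seq_incr_1. apply (is_lim_seq_ext (sum_n (fun j => Tj j / INR (S j)))).
    intros n. unfold B. apply sum_n_rs. apply Series_correct. apply L_ex. }
  assert (Heps : is_lim_seq eps 0).
  { unfold eps. replace (Finite 0) with (Rbar_mult 0 (Y s / (1 - s))) by (simpl; f_equal; ring).
    apply is_lim_seq_scal_r. apply is_lim_seq_geom. rewrite Rabs_right; lra. }
  assert (Hclose : forall N, Rabs (rs (fun n => cc n * phi n) (S N) - B N) <= eps N).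
  { intros N. rewrite cc_partial. unfold B. unfold Rminus at 1. rewrite <- rs_opp, <- rs_plus.
    rewrite (rs_ext _ (fun j => (rs (fun d => yv d * phi (S j * d)%nat) (S (N / S j)) - Tj j) * / INR (S j))).
    2: { intros j Hj.
         rewrite (inner_div j N (fun d => yv d * phi (S j * d)%nat / INR (S j))) by (rewrite yv_0; unfold Rdiv; ring).
         rewrite (rs_ext (fun d => yv d * phi (S j * d)%nat / INR (S j)) (fun d => / INR (S j) * (yv d * phi (S j * d)%nat))) by (intros; unfold Rdiv; ring).
         rewrite rs_scal. unfold Rdiv. ring. }
    eapply Rle_trans. apply rs_abs.
    apply Rle_trans with (rs (fun j => q ^ N * Y s * s ^ j) N).
    - apply rs_le. intros j Hj. rewrite Rabs_mult. rewrite (Rabs_right (/ _)) by (apply Rle_ge, Rlt_le, inv_INR_S_pos).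
      apply Rle_trans with (Rabs (rs (fun d => yv d * phi (S j * d)%nat) (S (N / S j)) - Tj j) * 1).
      apply Rmult_le_compat_l. apply Rabs_pos. apply inv_INR_S_le1. rewrite Rmult_1_r.
      eapply Rle_trans. apply tail_bound. right; ring.
    - rewrite rs_scal. unfold eps. unfold Rdiv. rewrite <- Rmult_assoc. apply Rmult_le_compat_l.
      apply Rmult_le_pos; auto. apply pow_le; lra. apply rs_geom_le. lra. }
  assert (Hlim : is_lim_seq (fun N => rs (fun n => cc n * phi n) (S N)) L).
  { apply (is_lim_seq_le_le (fun N => B N - eps N) _ (fun N => B N + eps N)).
    - intros N. specialize (Hclose N). apply Rabs_le_between' in Hclose. lra.
    - replace (Finite L) with (Rbar_minus L 0) by (simpl; f_equal; ring). apply is_lim_seq_minus'; auto.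
    - replace (Finite L) with (Rbar_plus L 0) by (simpl; f_equal; ring). apply is_lim_seq_plus'; auto. }
  apply (is_lim_seq_ext _ _ _ (fun N => eq_sym (sum_n_rs _ N))) in Hlim. exact Hlim.
Qed.
End Swap.

Lemma rad_ok (a b : nat -> R) (m s : R) :
  (forall n, Rabs (a n) <= b n * m ^ n) -> (forall n, 0 <= b n) ->
  ex_series (fun n => b n * s ^ n) -> 0 <= m < s ->
  forall t, Rabs t <= 1 -> Rbar_lt (Rabs t) (CV_radius a).
Proof.
  intros Hab Hb Hex Hms t Ht.
  set (r := 2 * s / (m + s)).
  assert (Hr1 : 1 < r). { unfold r. apply (Rmult_lt_reg_r (m + s)). lra. unfold Rdiv. rewrite Rmult_assoc, Rinv_l; lra. }
  assert (Hmr : m * r <= s). { unfold r. apply (Rmult_le_reg_r (m + s)). lra. unfold Rdiv. 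
    replace (m * (2 * s * / (m + s)) * (m + s)) with (2 * s * m) by (field; lra). nra. }
  assert (Hr0 : 0 <= r) by lra.
  destruct (CV_radius_bounded a) as [Hub _].
  assert (Hle : Rbar_le r (CV_radius a)).
  { apply Hub. exists (Series (fun n => b n * s ^ n)). intros n.
    rewrite Rabs_mult. rewrite (Rabs_right (r ^ n)) by (apply Rle_ge, pow_le; lra).
    apply Rle_trans with (b n * m ^ n * r ^ n). apply Rmult_le_compat_r. apply pow_le; lra. auto.
    apply Rle_trans with (b n * s ^ n).
    rewrite Rmult_assoc, <- Rpow_mult_distr. apply Rmult_le_compat_l; auto. apply pow_incr. split; [nra|auto].
    apply (term_le_Series (fun n => b n * s ^ n)); auto. intros k; apply Rmult_le_pos; auto. apply pow_le; lra. }
  destruct (CV_radius a) as [R| |]; simpl in *; lra || auto.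
Qed.

Section ODE.
Variable z : C.
Hypothesis Hz : Cmod z < rho.

Definition gr n := yv (S n) * Re (Cpow z n).
Definition gi n := yv (S n) * Im (Cpow z n).
Definition cr n := cc n * Re (Cpow z n).
Definition ci n := cc n * Im (Cpow z n).

Let m := Cmod z.
Let s := (m + rho) / 2.

Lemma ms_facts : 0 <= m < s /\ 0 < s /\ s < rho.
Proof. assert (Hr := rho_bounds). assert (H0 := Cmod_ge_0 z). unfold s, m in *. repeat split; lra. Qed.

Lemma Re_pow_bound n : Rabs (Re (Cpow z n)) <= m ^ n.
Proof. eapply Rle_trans. apply re_le_Cmod. unfold m. rewrite Cmod_pow. lra. Qed.
Lemma Im_pow_bound n : Rabs (Im (Cpow z n)) <= m ^ n.
Proof. eapply Rle_trans. 2: { unfold m. rewrite <- Cmod_pow. apply Rle_refl. }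
  eapply Rle_trans; [apply Rmax_r|apply Rmax_Cmod]. Qed.

Lemma ex_g : ex_series (fun n => yv (S n) * s ^ n).
Proof.
  destruct ms_facts as (H1 & H2 & H3).
  assert (H : ex_series (fun n => yv (S n) * s ^ S n)).
  { apply (ex_series_incr_1 (fun n => yv n * s ^ n)). apply ex_Y. lra. }
  apply (ex_series_ext (fun n => / s * (yv (S n) * s ^ S n))). intros n. simpl. field. lra.
  exact (ex_series_scal_l (/ s) _ H).
Qed.

Lemma rad_g a : (forall n, Rabs (a n) <= yv (S n) * m ^ n) -> forall t, Rabs t <= 1 -> Rbar_lt (Rabs t) (CV_radius a).
Proof.
  intros Ha. destruct ms_facts as (H1 & H2 & H3). apply (rad_ok a (fun n => yv (S n)) m s); auto.
  intros; apply yv_nonneg. apply ex_g.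
Qed.

Lemma rad_c a : (forall n, Rabs (a n) <= cc n * m ^ n) -> forall t, Rabs t <= 1 -> Rbar_lt (Rabs t) (CV_radius a).
Proof.
  intros Ha. destruct ms_facts as (H1 & H2 & H3). apply (rad_ok a cc m s); auto.
  apply cc_nonneg. apply cc_ex. lra.
Qed.

Lemma rad_gr t : Rabs t <= 1 -> Rbar_lt (Rabs t) (CV_radius gr).
Proof. apply rad_g. intros n. unfold gr. rewrite Rabs_mult, Rabs_right by (apply Rle_ge, yv_nonneg). apply Rmult_le_compat_l. apply yv_nonneg. apply Re_pow_bound. Qed.
Lemma rad_gi t : Rabs t <= 1 -> Rbar_lt (Rabs t) (CV_radius gi).
Proof. apply rad_g. intros n. unfold gi. rewrite Rabs_mult, Rabs_right by (apply Rle_ge, yv_nonneg). apply Rmult_le_compat_l. apply yv_nonneg. apply Im_pow_bound. Qed.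
Lemma rad_cr t : Rabs t <= 1 -> Rbar_lt (Rabs t) (CV_radius cr).
Proof. apply rad_c. intros n. unfold cr. rewrite Rabs_mult, Rabs_right by (apply Rle_ge, cc_nonneg). apply Rmult_le_compat_l. apply cc_nonneg. apply Re_pow_bound. Qed.
Lemma rad_ci t : Rabs t <= 1 -> Rbar_lt (Rabs t) (CV_radius ci).
Proof. apply rad_c. intros n. unfold ci. rewrite Rabs_mult, Rabs_right by (apply Rle_ge, cc_nonneg). apply Rmult_le_compat_l. apply cc_nonneg. apply Im_pow_bound. Qed.

Lemma PSder_c (phi : nat -> R) k : PS_derive (fun n => cc n * phi n) k = bR (S k) * phi (S k).
Proof. unfold PS_derive, cc. simpl Nat.eqb. cbv iota. field. apply Rgt_not_eq, INR_S_pos. Qed.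

Lemma PSmult_rs a b n : PS_mult a b n = rs (fun k => a k * b (n - k)%nat) (S n).
Proof. unfold PS_mult. apply sum_f_rs. Qed.

Lemma Cpow_split k n : (k <= n)%nat -> Cpow z (S n) = Cmult (Cpow z (S k)) (Cpow z (n - k)).
Proof. intros H. rewrite <- Cpow_add_r. f_equal. lia. Qed.

Lemma REC' n : INR (S n) * yv (S (S n)) = rs (fun k => bR (S k) * yv (S (n - k))) (S n).
Proof. rewrite REC. apply rs_ext. intros i Hi. f_equal. f_equal. lia. Qed.

Lemma coef_gr n : PS_derive gr n = PS_mult (PS_derive cr) gr n - PS_mult (PS_derive ci) gi n.
Proof.
  rewrite !PSmult_rs. unfold Rminus. rewrite <- rs_opp, <- rs_plus.
  unfold PS_derive at 1, gr at 1. rewrite <- Rmult_assoc, REC', Rmult_comm, <- rs_scal.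
  apply rs_ext. intros k Hk. unfold cr, ci. rewrite !PSder_c. unfold gr, gi.
  rewrite (Cpow_split k n) by lia. unfold Cmult, Re, Im. simpl. ring.
Qed.

Lemma coef_gi n : PS_derive gi n = PS_mult (PS_derive cr) gi n + PS_mult (PS_derive ci) gr n.
Proof.
  rewrite !PSmult_rs. rewrite <- rs_plus.
  unfold PS_derive at 1, gi at 1. rewrite <- Rmult_assoc, REC', Rmult_comm, <- rs_scal.
  apply rs_ext. intros k Hk. unfold cr, ci. rewrite !PSder_c. unfold gr, gi.
  rewrite (Cpow_split k n) by lia. unfold Cmult, Re, Im. simpl. ring.
Qed.

Lemma ex_ps_mult_der a b t : Rabs t <= 1 -> (forall t, Rabs t <= 1 -> Rbar_lt (Rabs t) (CV_radius a)) ->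
  (forall t, Rabs t <= 1 -> Rbar_lt (Rabs t) (CV_radius b)) -> ex_pseries (PS_mult (PS_derive a) b) t.
Proof. intros Ht Ha Hb. apply ex_pseries_mult. rewrite CV_radius_derive. auto. auto. Qed.

Lemma mult_der a b t : Rabs t <= 1 -> (forall t, Rabs t <= 1 -> Rbar_lt (Rabs t) (CV_radius a)) ->
  (forall t, Rabs t <= 1 -> Rbar_lt (Rabs t) (CV_radius b)) -> PSeries (PS_mult (PS_derive a) b) t = PSeries (PS_derive a) t * PSeries b t.
Proof. intros Ht Ha Hb. apply PSeries_mult. rewrite CV_radius_derive. auto. auto. Qed.

Lemma DGR t : Rabs t <= 1 -> PSeries (PS_derive gr) t = PSeries (PS_derive cr) t * PSeries gr t - PSeries (PS_derive ci) t * PSeries gi t.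
Proof.
  intros Ht. rewrite (PSeries_ext _ (PS_minus (PS_mult (PS_derive cr) gr) (PS_mult (PS_derive ci) gi))) by apply coef_gr.
  rewrite PSeries_minus. rewrite !mult_der; auto using rad_gr, rad_gi, rad_cr, rad_ci.
  apply ex_ps_mult_der; auto using rad_gr, rad_cr. apply ex_ps_mult_der; auto using rad_gi, rad_ci.
Qed.

Lemma DGI t : Rabs t <= 1 -> PSeries (PS_derive gi) t = PSeries (PS_derive cr) t * PSeries gi t + PSeries (PS_derive ci) t * PSeries gr t.
Proof.
  intros Ht. rewrite (PSeries_ext _ (PS_plus (PS_mult (PS_derive cr) gi) (PS_mult (PS_derive ci) gr))) by apply coef_gi.
  rewrite PSeries_plus. rewrite !mult_der; auto using rad_gr, rad_gi, rad_cr, rad_ci.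
  apply ex_ps_mult_der; auto using rad_gi, rad_cr. apply ex_ps_mult_der; auto using rad_gr, rad_ci.
Qed.

Definition hr t := PSeries gr t * exp (- PSeries cr t) * cos (PSeries ci t) + PSeries gi t * exp (- PSeries cr t) * sin (PSeries ci t).
Definition hi t := - PSeries gr t * exp (- PSeries cr t) * sin (PSeries ci t) + PSeries gi t * exp (- PSeries cr t) * cos (PSeries ci t).

Lemma DerPS a t : Rbar_lt (Rabs t) (CV_radius a) -> Derive (fun x => PSeries a x) t = PSeries (PS_derive a) t.
Proof. intros H. exact (Derive_PSeries a t H). Qed.

Lemma exdPS a t : Rbar_lt (Rabs t) (CV_radius a) -> ex_derive (fun x => PSeries a x) t.
Proof. intros H. exact (ex_derive_PSeries a t H). Qed.

Lemma hr_deriv t : Rabs t <= 1 -> is_derive hr t 0.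
Proof.
  intros Ht. unfold hr. auto_derive.
  - repeat split; apply exdPS; auto using rad_gr, rad_gi, rad_cr, rad_ci.
  - rewrite !DerPS by auto using rad_gr, rad_gi, rad_cr, rad_ci.
    rewrite DGR, DGI by auto. ring.
Qed.

Lemma hi_deriv t : Rabs t <= 1 -> is_derive hi t 0.
Proof.
  intros Ht. unfold hi. auto_derive.
  - repeat split; apply exdPS; auto using rad_gr, rad_gi, rad_cr, rad_ci.
  - rewrite !DerPS by auto using rad_gr, rad_gi, rad_cr, rad_ci.
    rewrite DGR, DGI by auto. ring.
Qed.

Lemma const_01 (h : R -> R) : (forall t, Rabs t <= 1 -> is_derive h t 0) -> h 1 = h 0.
Proof.
  intros Hd.
  destruct (MVT_gen h 0 1 (fun _ => 0)) as [c [_ Hc]].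
  - intros x Hx. apply Hd. rewrite Rmin_left, Rmax_right in Hx by lra. rewrite Rabs_right; lra.
  - intros x Hx. rewrite Rmin_left, Rmax_right in Hx by lra.
    assert (H := Hd x ltac:(rewrite Rabs_right; lra)). apply is_derive_Reals in H.
    apply (derivable_continuous_pt h x (exist _ 0 H)).
  - lra.
Qed.

Lemma PS_at0 a : PSeries a 0 = a O.
Proof. apply PSeries_0. Qed.

Lemma hr_1 : hr 1 = 1.
Proof.
  rewrite (const_01 hr hr_deriv). unfold hr. rewrite !PS_at0. unfold gr, gi, cr, ci, cc. simpl Nat.eqb. cbv iota.
  simpl Cpow. rewrite yv_1. unfold RtoC, Re, Im. simpl. rewrite !Rmult_0_l, Ropp_0, exp_0, cos_0, sin_0. ring.
Qed.

Lemma hi_1 : hi 1 = 0.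
Proof.
  rewrite (const_01 hi hi_deriv). unfold hi. rewrite !PS_at0. unfold gr, gi, cr, ci, cc. simpl Nat.eqb. cbv iota.
  simpl Cpow. rewrite yv_1. unfold RtoC, Re, Im. simpl. rewrite !Rmult_0_l, Ropp_0, exp_0, cos_0, sin_0. ring.
Qed.

Lemma PS_at1 a : PSeries a 1 = Series a.
Proof. unfold PSeries. apply Series_ext. intros n. rewrite pow1. ring. Qed.

Lemma G_eq_exp : (Series gr, Series gi) = Cexp (Series cr, Series ci).
Proof.
  assert (H1 := hr_1). assert (H2 := hi_1). unfold hr, hi in *. rewrite !PS_at1 in H1, H2.
  set (a := Series gr) in *. set (b := Series gi) in *. set (c := Series cr) in *. set (d := Series ci) in *.
  unfold Cexp. simpl. 
  assert (He := exp_pos c). assert (Hsc := sin2_cos2 d). unfold Rsqr in Hsc.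
  assert (Ec : exp (- c) * exp c = 1) by (rewrite <- exp_plus; replace (- c + c) with 0 by ring; apply exp_0).
  assert (Ea : a * exp (- c) = cos d * (a * exp (- c) * cos d + b * exp (- c) * sin d) - sin d * (- a * exp (- c) * sin d + b * exp (- c) * cos d)).
  { transitivity (a * exp (- c) * (sin d * sin d + cos d * cos d)). rewrite Hsc; ring. ring. }
  assert (Eb : b * exp (- c) = sin d * (a * exp (- c) * cos d + b * exp (- c) * sin d) + cos d * (- a * exp (- c) * sin d + b * exp (- c) * cos d)).
  { transitivity (b * exp (- c) * (sin d * sin d + cos d * cos d)). rewrite Hsc; ring. ring. }
  rewrite H1, H2 in Ea, Eb.
  f_equal.
  - apply (Rmult_eq_reg_l (exp (- c))). 2: apply Rgt_not_eq, exp_pos.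
    replace (exp (- c) * (exp c * cos d)) with (cos d) by (rewrite <- Rmult_assoc, Ec; ring). lra.
  - apply (Rmult_eq_reg_l (exp (- c))). 2: apply Rgt_not_eq, exp_pos.
    replace (exp (- c) * (exp c * sin d)) with (sin d) by (rewrite <- Rmult_assoc, Ec; ring). lra.
Qed.
End ODE.

Lemma Re_RtoC_mult a w : Re (Cmult (RtoC a) w) = a * Re w.
Proof. unfold Cmult, RtoC, Re, Im. simpl. ring. Qed.
Lemma Im_RtoC_mult a w : Im (Cmult (RtoC a) w) = a * Im w.
Proof. unfold Cmult, RtoC, Re, Im. simpl. ring. Qed.
Lemma Re_div_R w k : k <> 0 -> Re (Cdiv w (RtoC k)) = Re w / k.
Proof. intros Hk. unfold Cdiv, Cmult, Cinv, RtoC, Re, Im. simpl. field. auto. Qed.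
Lemma Im_div_R w k : k <> 0 -> Im (Cdiv w (RtoC k)) = Im w / k.
Proof. intros Hk. unfold Cdiv, Cmult, Cinv, RtoC, Re, Im. simpl. field. auto. Qed.

Lemma Re_ytree w : Re (ytree w) = Series (fun d => yv d * Re (Cpow w d)).
Proof. unfold ytree, csum. simpl. apply Series_ext. intros. apply Re_RtoC_mult. Qed.
Lemma Im_ytree w : Im (ytree w) = Series (fun d => yv d * Im (Cpow w d)).
Proof. unfold ytree, csum. simpl. apply Series_ext. intros. apply Im_RtoC_mult. Qed.

Lemma Re_bound_m (z : C) n : Rabs (Re (Cpow z n)) <= Cmod z ^ n.
Proof. eapply Rle_trans. apply re_le_Cmod. rewrite Cmod_pow. lra. Qed.
Lemma Im_bound_m (z : C) n : Rabs (Im (Cpow z n)) <= Cmod z ^ n.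
Proof. eapply Rle_trans. 2: { rewrite <- Cmod_pow. apply Rle_refl. }
  eapply Rle_trans; [apply Rmax_r|apply Rmax_Cmod]. Qed.

Section FE.
Variable z : C.
Hypothesis Hz : Cmod z < rho.

Let s := (Cmod z + rho) / 2.

Lemma ex_gr : ex_series (gr z).
Proof.
  assert (H := ex_g z Hz). assert (H0 := Cmod_ge_0 z). assert (Hr := rho_bounds).
  apply (ex_series_le (gr z) (fun n => yv (S n) * ((Cmod z + rho) / 2) ^ n)); auto.
  intros n. change (norm (gr z n)) with (Rabs (gr z n)). unfold gr. rewrite Rabs_mult, Rabs_right by (apply Rle_ge, yv_nonneg).
  apply Rmult_le_compat_l. apply yv_nonneg. eapply Rle_trans. apply Re_bound_m. apply pow_incr. lra.
Qed.
Lemma ex_gi : ex_series (gi z).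
Proof.
  assert (H := ex_g z Hz). assert (H0 := Cmod_ge_0 z). assert (Hr := rho_bounds).
  apply (ex_series_le (gi z) (fun n => yv (S n) * ((Cmod z + rho) / 2) ^ n)); auto.
  intros n. change (norm (gi z n)) with (Rabs (gi z n)). unfold gi. rewrite Rabs_mult, Rabs_right by (apply Rle_ge, yv_nonneg).
  apply Rmult_le_compat_l. apply yv_nonneg. eapply Rle_trans. apply Im_bound_m. apply pow_incr. lra.
Qed.

Lemma ex_yRe : ex_series (fun d => yv d * Re (Cpow z d)).
Proof.
  apply ex_series_incr_1. apply (ex_series_ext (fun n => Re z * gr z n - Im z * gi z n)).
  intros n. unfold gr, gi. simpl Cpow. unfold Cmult, Re, Im. simpl. ring.
  apply (ex_series_minus (fun n => Re z * gr z n) (fun n => Im z * gi z n)).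
  exact (ex_series_scal_l (Re z) _ ex_gr). exact (ex_series_scal_l (Im z) _ ex_gi).
Qed.

Lemma ytree_shift : ytree z = Cmult z (Series (gr z), Series (gi z)).
Proof.
  apply injective_projections.
  - change (fst (ytree z)) with (Re (ytree z)). rewrite Re_ytree.
    rewrite Series_incr_1. 2: { apply ex_series_incr_1. apply (ex_series_ext (fun n => Re z * gr z n - Im z * gi z n)).
      intros n. unfold gr, gi. simpl Cpow. unfold Cmult, Re, Im. simpl. ring.
      apply (ex_series_minus (fun n => Re z * gr z n) (fun n => Im z * gi z n)).
      exact (ex_series_scal_l (Re z) _ ex_gr). exact (ex_series_scal_l (Im z) _ ex_gi). }
    rewrite yv_0, Rmult_0_l, Rplus_0_l.
    rewrite (Series_ext _ (fun n => Re z * gr z n - Im z * gi z n)).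
    2: { intros n. unfold gr, gi. simpl Cpow. unfold Cmult, Re, Im. simpl. ring. }
    rewrite Series_minus, !Series_scal_l. unfold Cmult, Re, Im. simpl. ring.
    exact (ex_series_scal_l (Re z) _ ex_gr). exact (ex_series_scal_l (Im z) _ ex_gi).
  - change (snd (ytree z)) with (Im (ytree z)). rewrite Im_ytree.
    rewrite Series_incr_1. 2: { apply ex_series_incr_1. apply (ex_series_ext (fun n => Re z * gi z n + Im z * gr z n)).
      intros n. unfold gr, gi. simpl Cpow. unfold Cmult, Re, Im. simpl. ring.
      apply (ex_series_plus (fun n => Re z * gi z n) (fun n => Im z * gr z n)).
      exact (ex_series_scal_l (Re z) _ ex_gi). exact (ex_series_scal_l (Im z) _ ex_gr). }
    rewrite yv_0, Rmult_0_l, Rplus_0_l.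
    rewrite (Series_ext _ (fun n => Re z * gi z n + Im z * gr z n)).
    2: { intros n. unfold gr, gi. simpl Cpow. unfold Cmult, Re, Im. simpl. ring. }
    rewrite Series_plus, !Series_scal_l. unfold Cmult, Re, Im. simpl. ring.
    exact (ex_series_scal_l (Re z) _ ex_gi). exact (ex_series_scal_l (Im z) _ ex_gr).
Qed.

Lemma Q_swap : csum (fun j => Cdiv (ytree (Cpow z (S j))) (RtoC (INR (S j)))) = (Series (cr z), Series (ci z)).
Proof.
  assert (Hm : 0 <= Cmod z < rho) by (split; auto; apply Cmod_ge_0).
  unfold csum. f_equal.
  - transitivity (Series (fun j => Tj (fun n => Re (Cpow z n)) j / INR (S j))).
    + apply Series_ext. intros j. rewrite Re_div_R by (apply Rgt_not_eq, INR_S_pos). rewrite Re_ytree.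
      unfold Tj. f_equal. apply Series_ext. intros d. rewrite Cpow_mult_r. reflexivity.
    + symmetry. apply is_series_unique. exact (swap_series (fun n => Re (Cpow z n)) (Cmod z) Hm (Re_bound_m z)).
  - transitivity (Series (fun j => Tj (fun n => Im (Cpow z n)) j / INR (S j))).
    + apply Series_ext. intros j. rewrite Im_div_R by (apply Rgt_not_eq, INR_S_pos). rewrite Im_ytree.
      unfold Tj. f_equal. apply Series_ext. intros d. rewrite Cpow_mult_r. reflexivity.
    + symmetry. apply is_series_unique. exact (swap_series (fun n => Im (Cpow z n)) (Cmod z) Hm (Im_bound_m z)).
Qed.

Theorem FE_C : ytree z = Cmult z (Cexp (csum (fun j => Cdiv (ytree (Cpow z (S j))) (RtoC (INR (S j)))))).
Proof. rewrite Q_swap, ytree_shift, (G_eq_exp z Hz). reflexivity. Qed.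
End FE.

Lemma exp_le_exp x y : x <= y -> exp x <= exp y.
Proof. intros H. destruct (Req_dec x y). subst; lra. left. apply exp_increasing. lra. Qed.

Lemma Series_zero : Series (fun _ => 0) = 0.
Proof. rewrite (Series_ext _ (fun n => 0 * 1)) by (intros; ring). rewrite Series_scal_l. ring. Qed.

Lemma Cmod_RtoC_nonneg w : 0 <= w -> Cmod (RtoC w) = w.
Proof. intros H. rewrite Cmod_R. apply Rabs_right. lra. Qed.

Lemma ytree_real w : 0 <= w < rho -> ytree (RtoC w) = RtoC (Y w).
Proof.
  intros Hw. apply injective_projections.
  - change (fst (ytree w)) with (Re (ytree w)). rewrite Re_ytree. unfold Y. simpl. apply Series_ext.
    intros d. rewrite <- RtoC_pow. reflexivity.
  - change (snd (ytree w)) with (Im (ytree w)). rewrite Im_ytree. simpl.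
    rewrite <- Series_zero. apply Series_ext. intros d. rewrite <- RtoC_pow. simpl. ring.
Qed.

Definition Aser (t : R) := Series (fun j => Y (t ^ S j) / INR (S j)).

Lemma Aterm_nonneg t j : 0 <= t < rho -> 0 <= Y (t ^ S j) / INR (S j).
Proof.
  intros Ht. apply Rmult_le_pos. apply Y_nonneg. apply pow_small; auto.
  apply Rlt_le, inv_INR_S_pos.
Qed.

Lemma Aterm_bound t j : 0 <= t < rho -> Y (t ^ S j) / INR (S j) <= Y t * t ^ j.
Proof.
  intros Ht. apply Rle_trans with (Y (t ^ S j) * 1). apply Rmult_le_compat_l. apply Y_nonneg, pow_small; auto.
  apply inv_INR_S_le1. rewrite Rmult_1_r, Rmult_comm. apply Y_pow_le; auto.
Qed.

Lemma ex_Aser t : 0 <= t < rho -> ex_series (fun j => Y (t ^ S j) / INR (S j)).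
Proof.
  intros Ht. assert (Hr := rho_bounds).
  apply (ex_series_le (fun j => Y (t ^ S j) / INR (S j)) (fun j => Y t * t ^ j)).
  intros j. change (norm (Y (t ^ S j) / INR (S j))) with (Rabs (Y (t ^ S j) / INR (S j))).
  rewrite Rabs_right by (apply Rle_ge, Aterm_nonneg; auto). apply Aterm_bound; auto.
  assert (Hg : ex_series (fun j => t ^ j)) by (apply ex_series_geom; rewrite Rabs_right; lra).
  exact (ex_series_scal_l (Y t) _ Hg).
Qed.

Lemma FE_R t : 0 <= t < rho -> Y t = t * exp (Aser t).
Proof.
  intros Ht. assert (Hz : Cmod (RtoC t) < rho) by (rewrite Cmod_RtoC_nonneg; lra).
  assert (H := FE_C (RtoC t) Hz). rewrite ytree_real in H by auto.
  assert (Hc : csum (fun j => Cdiv (ytree (Cpow (RtoC t) (S j))) (RtoC (INR (S j)))) = RtoC (Aser t)).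
  { apply injective_projections.
    - change (fst (csum (fun j => Cdiv (ytree (Cpow (RtoC t) (S j))) (RtoC (INR (S j)))))) with
        (Series (fun j => Re (Cdiv (ytree (Cpow (RtoC t) (S j))) (RtoC (INR (S j)))))).
      change (fst (RtoC (Aser t))) with (Aser t). unfold Aser. apply Series_ext. intros j.
      rewrite Re_div_R by (apply Rgt_not_eq, INR_S_pos). rewrite <- RtoC_pow, ytree_real by (apply pow_small; auto). reflexivity.
    - change (snd (csum (fun j => Cdiv (ytree (Cpow (RtoC t) (S j))) (RtoC (INR (S j)))))) with
        (Series (fun j => Im (Cdiv (ytree (Cpow (RtoC t) (S j))) (RtoC (INR (S j)))))).
      change (snd (RtoC (Aser t))) with 0. rewrite <- Series_zero. apply Series_ext. intros j.
      rewrite Im_div_R by (apply Rgt_not_eq, INR_S_pos). rewrite <- RtoC_pow, ytree_real by (apply pow_small; auto).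
      simpl. unfold Rdiv. ring. }
  rewrite Hc in H. apply (f_equal Re) in H. unfold Cexp, Cmult, RtoC, Re, Im in H. simpl in H.
  rewrite cos_0, sin_0 in H. rewrite H. ring.
Qed.

Lemma Aser_split t : 0 <= t < rho -> Aser t = Y t + Series (fun j => Y (t ^ S (S j)) / INR (S (S j))).
Proof.
  intros Ht. unfold Aser. rewrite Series_incr_1 by (apply ex_Aser; auto). simpl pow at 1.
  rewrite Rmult_1_r. unfold INR at 1. simpl. f_equal. field.
Qed.

Lemma A2_mono s t : 0 <= s <= t -> t < rho ->
  Series (fun j => Y (s ^ S (S j)) / INR (S (S j))) <= Series (fun j => Y (t ^ S (S j)) / INR (S (S j))).
Proof.
  intros Hs Ht. apply Series_le.
  - intros j. split. apply Aterm_nonneg. lra. unfold Rdiv. apply Rmult_le_compat_r. apply Rlt_le, inv_INR_S_pos.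
    apply Y_mono. split. apply pow_le; lra. apply pow_incr; lra. apply pow_small; lra.
  - apply (ex_series_incr_1 (fun j => Y (t ^ S j) / INR (S j))). apply ex_Aser. lra.
Qed.

Lemma A2_nonneg t : 0 <= t < rho -> 0 <= Series (fun j => Y (t ^ S (S j)) / INR (S (S j))).
Proof.
  intros Ht. apply Series_nonneg. intros j. apply Aterm_nonneg; auto.
  apply (ex_series_incr_1 (fun j => Y (t ^ S j) / INR (S j))). apply ex_Aser. lra.
Qed.

Lemma xexp_le y : y * exp (- y) <= exp (- 1).
Proof.
  assert (H := exp_ineq1_le (y - 1)).
  assert (E : exp (- 1) = exp (y - 1) * exp (- y)) by (rewrite <- exp_plus; f_equal; ring).
  rewrite E. apply Rmult_le_compat_r. apply Rlt_le, exp_pos. lra.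
Qed.

Lemma t_le_inv_e t : 0 <= t < rho -> t <= exp (- 1).
Proof.
  intros Ht. assert (H := FE_R t Ht). rewrite Aser_split in H by auto.
  assert (H2 := A2_nonneg t Ht). set (a2 := Series _) in *.
  eapply Rle_trans. 2: apply (xexp_le (Y t)).
  rewrite H at 1. rewrite Rmult_assoc, <- exp_plus.
  rewrite <- (Rmult_1_r t) at 1. apply Rmult_le_compat_l. lra.
  rewrite <- exp_0. apply exp_le_exp. lra.
Qed.

Lemma rho_le_inv_e : rho <= exp (- 1).
Proof.
  destruct (Rle_dec rho (exp (-1))) as [H|H]; auto. exfalso.
  assert (Hp := rho_pos). assert (He := exp_pos (-1)).
  assert (H1 := t_le_inv_e ((exp (-1) + rho) / 2) ltac:(split; lra)). lra.
Qed.

Lemma Y_0 : Y 0 = 0.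
Proof.
  unfold Y. transitivity (Series (fun _ => 0)); [|apply Series_zero]. apply Series_ext. intros [|n]. rewrite yv_0; ring. rewrite pow_i by lia. ring.
Qed.

Lemma xexp_decr a b : 1 <= a <= b -> b * exp (- b) <= a * exp (- a).
Proof.
  intros H. assert (H1 := exp_ineq1_le (b - a)).
  assert (E : exp (- a) = exp (b - a) * exp (- b)) by (rewrite <- exp_plus; f_equal; ring).
  rewrite E. rewrite <- Rmult_assoc. apply Rmult_le_compat_r. apply Rlt_le, exp_pos.
  nra.
Qed.

Lemma Y_le_1 t : 0 <= t < rho -> Y t <= 1.
Proof.
  intros Ht. destruct (Rle_dec (Y t) 1) as [H|H]; auto. exfalso.
  assert (Ht0 : 0 < t). { destruct (Req_dec t 0); [subst; rewrite Y_0 in H; lra|lra]. }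
  assert (Hc : continuity_pt Y t).
  { apply PSeries_continuity. rewrite rho_eq. simpl. rewrite Rabs_right; lra. }
  destruct (Hc (Y t - 1) ltac:(lra)) as [alp [Ha Hx]].
  set (t1 := t - Rmin alp t / 2).
  assert (Hmin := Rmin_l alp t). assert (Hmin2 := Rmin_r alp t). assert (Hmin3 : 0 < Rmin alp t) by (apply Rmin_pos; lra).
  assert (Ht1 : 0 <= t1 < t) by (unfold t1; lra).
  specialize (Hx t1). simpl in Hx. unfold D_x, no_cond, R_dist in Hx.
  assert (HY1 : 1 < Y t1).
  { assert (Rabs (Y t1 - Y t) < Y t - 1). apply Hx. split. split; auto. lra.
    unfold t1. rewrite Rabs_left; lra.
    apply Rabs_def2 in H0. lra. }
  assert (F1 := FE_R t1 ltac:(lra)). assert (F2 := FE_R t Ht).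
  rewrite Aser_split in F1, F2 by lra.
  assert (Hm := A2_mono t1 t ltac:(lra) ltac:(lra)).
  set (a1 := Series (fun j => Y (t1 ^ S (S j)) / INR (S (S j)))) in *.
  set (a2 := Series (fun j => Y (t ^ S (S j)) / INR (S (S j)))) in *.
  assert (G1 : Y t1 * exp (- Y t1) = t1 * exp a1).
  { rewrite F1 at 1. rewrite exp_plus. rewrite (Rmult_comm (exp (Y t1))), <- Rmult_assoc, Rmult_assoc.
    rewrite <- exp_plus. replace (Y t1 + - Y t1) with 0 by ring. rewrite exp_0. ring. }
  assert (G2 : Y t * exp (- Y t) = t * exp a2).
  { rewrite F2 at 1. rewrite exp_plus. rewrite (Rmult_comm (exp (Y t))), <- Rmult_assoc, Rmult_assoc.
    rewrite <- exp_plus. replace (Y t + - Y t) with 0 by ring. rewrite exp_0. ring. }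
  assert (HYm : Y t1 <= Y t) by (apply Y_mono; lra).
  assert (D := xexp_decr (Y t1) (Y t) ltac:(lra)).
  assert (Hea : exp a1 <= exp a2) by (apply exp_le_exp; auto).
  assert (He1 := exp_pos a1).
  assert (t1 * exp a1 < t * exp a2) by nra.
  lra.
Qed.

Lemma Cmod_div_R w k : 0 < k -> Cmod (Cdiv w (RtoC k)) = Cmod w / k.
Proof. intros Hk. rewrite Cmod_div. rewrite Cmod_R, Rabs_right by lra. auto.
  intros H. injection H. lra. Qed.

Lemma ytree_bound z : Cmod z < rho -> Cmod (ytree z) <= Y (Cmod z).
Proof.
  intros Hz. assert (H0 := Cmod_ge_0 z).
  assert (E : forall n, Cmod (Cmult (RtoC (INR (tree_count n))) (Cpow z n)) = yv n * Cmod z ^ n).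
  { intros n. rewrite Cmod_mult, Cmod_R, Cmod_pow, Rabs_right. reflexivity. apply Rle_ge, pos_INR. }
  destruct (csum_bound (fun n => Cmult (RtoC (INR (tree_count n))) (Cpow z n))) as (_ & _ & H).
  - apply (ex_series_ext (fun n => yv n * Cmod z ^ n)). intros; rewrite E; auto. apply ex_Y. lra.
  - unfold ytree. eapply Rle_trans. apply H. right. unfold Y. apply Series_ext. intros; apply E.
Qed.

Lemma Cpow_m1 (v : C) n : Cmod v <= 1 -> Cmod (Cminus (Cpow v n) (RtoC 1)) <= INR n * Cmod (Cminus v (RtoC 1)).
Proof.
  intros Hv. induction n. simpl. replace (Cminus 1 1) with (RtoC 0) by (unfold Cminus; ring). rewrite Cmod_0. lra.
  replace (Cminus (Cpow v (S n)) (RtoC 1)) with (Cplus (Cmult v (Cminus (Cpow v n) (RtoC 1))) (Cminus v (RtoC 1))) by (simpl; unfold Cminus; ring).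
  eapply Rle_trans. apply Cmod_triangle. rewrite Cmod_mult. rewrite S_INR.
  assert (0 <= Cmod (Cminus (Cpow v n) (RtoC 1))) by apply Cmod_ge_0.
  assert (Cmod v * Cmod (Cminus (Cpow v n) (RtoC 1)) <= Cmod (Cminus (Cpow v n) (RtoC 1))) by nra.
  lra.
Qed.

Lemma Cpow_m1_div (v : C) j : Cmod v <= 1 -> Cmod (Cminus (Cpow v (S j)) (RtoC 1)) / INR (S j) <= Cmod (Cminus v (RtoC 1)).
Proof.
  intros Hv. assert (H := Cpow_m1 v (S j) Hv). assert (Hp := INR_S_pos j).
  apply (Rmult_le_reg_r (INR (S j))). auto. unfold Rdiv. rewrite Rmult_assoc, Rinv_l by lra. lra.
Qed.

Lemma Y_scale a b : 0 <= a <= 1 -> 0 <= b < rho -> Y (a * b) <= a * Y b.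
Proof.
  intros Ha Hb. assert (Hr := rho_bounds). unfold Y. rewrite <- Series_scal_l. apply Series_le.
  2: apply ex_Yscal; auto.
  intros n. split. apply Rmult_le_pos. apply yv_nonneg. apply pow_le; nra.
  destruct n as [|n]. rewrite yv_0; lra.
  rewrite Rpow_mult_distr.
  replace (yv (S n) * (a ^ S n * b ^ S n)) with ((yv (S n) * b ^ S n) * a ^ S n) by ring.
  replace (a * (yv (S n) * b ^ S n)) with ((yv (S n) * b ^ S n) * a) by ring.
  apply Rmult_le_compat_l. apply Rmult_le_pos. apply yv_nonneg. apply pow_le; lra.
  simpl. assert (a ^ n <= 1) by (apply pow_le1; lra). nra.
Qed.

Lemma exp1_lb : 2.44 <= exp 1.
Proof.
  assert (H := exp_ineq1_le (1/4)). set (e := exp (1/4)) in *.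
  assert (E : exp 1 = e * e * (e * e)).
  { unfold e. rewrite <- !exp_plus. f_equal. field. }
  rewrite E. assert (H2 : 1.5625 <= e * e) by nra. nra.
Qed.

Lemma rho_le_041 : rho <= 0.41.
Proof.
  assert (H := rho_le_inv_e). replace (exp (- 1)) with (/ exp 1) in H by (rewrite <- exp_Ropp; f_equal; ring). assert (H1 := exp1_lb).
  eapply Rle_trans. apply H. apply (Rmult_le_reg_r (exp 1)). lra. rewrite Rinv_l by lra. nra.
Qed.

Definition LL : R := 7/10.
Definition r0 : R := (rho + rho / 10) ^ 2.

Lemma r0_facts : 0 < r0 /\ r0 < rho /\ r0 <= 1 /\ Y r0 <= LL * (1 - r0).
Proof.
  assert (Hr := rho_bounds). assert (H41 := rho_le_041).
  assert (Hr0 : r0 = 121/100 * rho * rho) by (unfold r0; simpl; field).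
  set (t0 := 10/11 * rho).
  assert (Ht0 : 0 <= r0 <= t0 /\ t0 < rho /\ 0 < t0) by (unfold t0; rewrite Hr0; repeat split; nra).
  assert (HY := Y_ratio r0 t0 ltac:(lra) ltac:(lra) ltac:(lra)).
  assert (HY1 := Y_le_1 t0 ltac:(lra)).
  assert (Hq : r0 / t0 = 1331/1000 * rho) by (unfold t0; rewrite Hr0; field; lra).
  assert (HYt : 0 <= Y t0) by (apply Y_nonneg; lra).
  assert (Hqp : 0 <= r0 / t0) by (rewrite Hq; lra).
  assert (Y r0 <= 1331/1000 * rho) by (rewrite <- Hq; nra).
  unfold LL. repeat split; try nra.
Qed.

Lemma pow_S_le_base r j : 0 <= r <= 1 -> r ^ S j <= r.
Proof. intros H. simpl. assert (r ^ j <= 1) by (apply pow_le1; lra). nra. Qed.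

Lemma main_ind k : forall z v, Cmod z <= r0 -> Cmod v <= 1 ->
  Cmod (yk k z v) <= Y (Cmod z) /\ Cmod (wk k z v) <= Cmod (Cminus v (RtoC 1)) * LL ^ k * Y (Cmod z).
Proof.
  destruct r0_facts as (Hr0p & Hr0r & Hr01 & HL).
  assert (Hrb := rho_bounds).
  induction k; intros z v Hz Hv; assert (Hz0 := Cmod_ge_0 z).
  - assert (Hyb := ytree_bound z ltac:(lra)). split.
    + simpl. rewrite Cmod_mult. assert (0 <= Cmod (ytree z)) by apply Cmod_ge_0. nra.
    + unfold wk. simpl. replace (Cminus (Cmult v (ytree z)) (ytree z)) with (Cmult (Cminus v (RtoC 1)) (ytree z)) by (unfold Cminus; ring).
      rewrite Cmod_mult. rewrite Rmult_1_r. apply Rmult_le_compat_l. apply Cmod_ge_0. auto.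
  - assert (Hzr : Cmod z < rho) by lra. set (r := Cmod z) in *.
    assert (Hrr : 0 <= r < rho) by lra.
    assert (Hzj : forall j, Cmod (Cpow z (S j)) = r ^ S j) by (intros; apply Cmod_pow).
    assert (Hzj' : forall j, Cmod (Cpow z (S j)) <= r0).
    { intros j. rewrite Hzj. eapply Rle_trans. apply pow_S_le_base. lra. lra. }
    assert (Hvj : forall j, Cmod (Cpow v (S j)) <= 1).
    { intros j. rewrite Cmod_pow. apply pow_le1. split; auto. apply Cmod_ge_0. }
    set (aY := fun j => Cdiv (ytree (Cpow z (S j))) (RtoC (INR (S j)))).
    set (aW := fun j => Cdiv (wk k (Cpow z (S j)) (Cpow v (S j))) (RtoC (INR (S j)))).
    set (aK := fun j => Cdiv (yk k (Cpow z (S j)) (Cpow v (S j))) (RtoC (INR (S j)))).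
    set (dv := Cmod (Cminus v (RtoC 1))).
    assert (Hdv : 0 <= dv) by apply Cmod_ge_0.
    assert (HLk : 0 <= LL ^ k) by (apply pow_le; unfold LL; lra).
    assert (HYr := Y_nonneg r Hrr).
    assert (BK : forall j, Cmod (aK j) <= Y (r ^ S j) / INR (S j)).
    { intros j. unfold aK. rewrite Cmod_div_R by apply INR_S_pos. unfold Rdiv. apply Rmult_le_compat_r.
      apply Rlt_le, inv_INR_S_pos. rewrite <- Hzj. apply IHk; auto. }
    assert (BY : forall j, Cmod (aY j) <= Y (r ^ S j) / INR (S j)).
    { intros j. unfold aY. rewrite Cmod_div_R by apply INR_S_pos. unfold Rdiv. apply Rmult_le_compat_r.
      apply Rlt_le, inv_INR_S_pos. rewrite <- Hzj. apply ytree_bound. rewrite Hzj. apply pow_small. auto. }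
    assert (BW : forall j, Cmod (aW j) <= dv * LL ^ k * Y r * r ^ j).
    { intros j. unfold aW. rewrite Cmod_div_R by apply INR_S_pos.
      destruct (IHk (Cpow z (S j)) (Cpow v (S j)) (Hzj' j) (Hvj j)) as [_ HW].
      rewrite Hzj in HW.
      apply Rle_trans with (Cmod (Cminus (Cpow v (S j)) (RtoC 1)) / INR (S j) * LL ^ k * Y (r ^ S j)).
      { unfold Rdiv.
        replace (Cmod (Cminus (Cpow v (S j)) (RtoC 1)) * / INR (S j) * LL ^ k * Y (r ^ S j)) with
          (Cmod (Cminus (Cpow v (S j)) (RtoC 1)) * LL ^ k * Y (r ^ S j) * / INR (S j)) by ring.
        apply Rmult_le_compat_r. apply Rlt_le, inv_INR_S_pos. auto. }
      assert (H1 := Cpow_m1_div v j Hv). fold dv in H1.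
      assert (H2 := Y_pow_le r j Hrr).
      assert (HYj : 0 <= Y (r ^ S j)) by (apply Y_nonneg, pow_small; auto).
      assert (0 <= Cmod (Cminus (Cpow v (S j)) (RtoC 1)) / INR (S j)).
      { apply Rmult_le_pos. apply Cmod_ge_0. apply Rlt_le, inv_INR_S_pos. }
      apply Rle_trans with (dv * LL ^ k * Y (r ^ S j)).
      apply Rmult_le_compat_r; auto. apply Rmult_le_compat_r; auto.
      replace (dv * LL ^ k * Y r * r ^ j) with (dv * LL ^ k * (r ^ j * Y r)) by ring.
      apply Rmult_le_compat_l. nra. auto. }
    assert (Hgeo : ex_series (fun j => r ^ j)) by (apply ex_series_geom; rewrite Rabs_right; lra).
    assert (ExK : ex_series (fun j => Cmod (aK j))).
    { apply (ex_series_le (fun j => Cmod (aK j)) (fun j => Y (r ^ S j) / INR (S j))); [|apply ex_Aser; auto].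
      intros j. change (norm (Cmod (aK j))) with (Rabs (Cmod (aK j))). rewrite Rabs_right by (apply Rle_ge, Cmod_ge_0). auto. }
    assert (ExY : ex_series (fun j => Cmod (aY j))).
    { apply (ex_series_le (fun j => Cmod (aY j)) (fun j => Y (r ^ S j) / INR (S j))); [|apply ex_Aser; auto].
      intros j. change (norm (Cmod (aY j))) with (Rabs (Cmod (aY j))). rewrite Rabs_right by (apply Rle_ge, Cmod_ge_0). auto. }
    assert (ExW : ex_series (fun j => Cmod (aW j))).
    { apply (ex_series_le (fun j => Cmod (aW j)) (fun j => (dv * LL ^ k * Y r) * r ^ j)).
      intros j. change (norm (Cmod (aW j))) with (Rabs (Cmod (aW j))). rewrite Rabs_right by (apply Rle_ge, Cmod_ge_0). auto.
      exact (ex_series_scal_l _ _ Hgeo). }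
    destruct (csum_bound aK ExK) as (KR & KI & KB).
    destruct (csum_bound aY ExY) as (YR & YI & YB).
    destruct (csum_bound aW ExW) as (WR & WI & WB).
    assert (Hsplit : csum aK = Cplus (csum aY) (csum aW)).
    { rewrite <- csum_plus; auto. apply csum_ext. intros j. unfold aK, aY, aW, wk, Cdiv, Cminus. ring. }
    assert (HFE := FE_C z Hzr). fold aY in HFE.
    assert (Eyk : yk (S k) z v = Cmult z (Cexp (csum aK))) by reflexivity.
    assert (Eyk2 : yk (S k) z v = Cmult (ytree z) (Cexp (csum aW))).
    { rewrite Eyk, Hsplit, Cexp_add, HFE. ring. }
    assert (I1 : Cmod (yk (S k) z v) <= Y r).
    { rewrite Eyk, Cmod_mult, Cmod_Cexp. fold r.
      rewrite (FE_R r Hrr). apply Rmult_le_compat_l. lra. apply exp_le_exp.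
      eapply Rle_trans. apply Rle_abs. eapply Rle_trans. apply re_le_Cmod. eapply Rle_trans. apply KB.
      apply Series_le. intros j; split; auto. apply Cmod_ge_0. apply ex_Aser; auto. }
    split; auto.
    set (cW := csum aW) in *.
    assert (HcW : Cmod cW <= dv * LL ^ k * Y r / (1 - r)).
    { eapply Rle_trans. apply WB.
      apply Rle_trans with (Series (fun j => dv * LL ^ k * Y r * r ^ j)).
      apply Series_le. intros j; split. apply Cmod_ge_0. auto. exact (ex_series_scal_l _ _ Hgeo).
      rewrite Series_scal_l, Series_geom by (rewrite Rabs_right; lra). right. unfold Rdiv. ring. }
    assert (Hyz := ytree_bound z Hzr). fold r in Hyz.
    assert (Ew : wk (S k) z v = Cmult (ytree z) (Cminus (Cexp cW) (RtoC 1))).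
    { unfold wk. rewrite Eyk2. unfold Cminus. ring. }
    rewrite Ew, Cmod_mult.
    assert (Hm1 := Cexp_m1 cW).
    assert (Hmax : Cmod (ytree z) * Rmax 1 (exp (Re cW)) <= Y r).
    { apply Rmax_case_strong; intros _. lra.
      rewrite <- Cmod_Cexp, <- Cmod_mult, <- Eyk2. auto. }
    assert (Hy0 : 0 <= Cmod (ytree z)) by apply Cmod_ge_0.
    apply Rle_trans with (Cmod cW * Y r).
    { apply Rle_trans with (Cmod (ytree z) * (Cmod cW * Rmax 1 (exp (Re cW)))).
      apply Rmult_le_compat_l; auto.
      replace (Cmod (ytree z) * (Cmod cW * Rmax 1 (exp (Re cW)))) with (Cmod cW * (Cmod (ytree z) * Rmax 1 (exp (Re cW)))) by ring.
      apply Rmult_le_compat_l. apply Cmod_ge_0. auto. }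
    assert (HYr0 : Y r <= Y r0) by (apply Y_mono; lra).
    assert (Hratio : Y r / (1 - r) <= LL).
    { apply (Rmult_le_reg_r (1 - r)). lra. unfold Rdiv. rewrite Rmult_assoc, Rinv_l by lra. rewrite Rmult_1_r.
      apply Rle_trans with (LL * (1 - r0)). lra. apply Rmult_le_compat_l. unfold LL; lra. lra. }
    apply Rle_trans with (dv * LL ^ k * Y r / (1 - r) * Y r).
    apply Rmult_le_compat_r; auto.
    simpl pow. replace (dv * LL ^ k * Y r / (1 - r) * Y r) with (dv * LL ^ k * Y r * (Y r / (1 - r))) by (field; lra).
    replace (dv * (LL * LL ^ k) * Y r) with (dv * LL ^ k * Y r * LL) by ring.
    apply Rmult_le_compat_l. apply Rmult_le_pos; auto. apply Rmult_le_pos; auto. auto.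
Qed.

Theorem mainTheorem10 :
  exists (eps Ct L : R), 0 < eps /\ 0 < Ct /\ 0 < L /\ L < 1 /\
    forall (u x : C) (k : nat),
      Cmod u <= 1 -> Cmod x <= rho + eps ->
      Cmod (Sigmak k x u) <= Ct * Cmod (Cminus u 1) * L ^ k.
Proof.
  destruct r0_facts as (Hr0p & Hr0r & Hr01 & HL).
  assert (Hrb := rho_bounds). assert (H41 := rho_le_041).
  exists (rho / 10), 2, LL. split; [lra|split;[lra|split;[unfold LL; lra|split;[unfold LL;lra|]]]].
  intros u x k Hu Hx.
  set (s := Cmod x) in *. assert (Hs0 : 0 <= s) by apply Cmod_ge_0.
  assert (Hs1 : s <= 0.451) by lra.
  assert (Hs2 : s * s <= r0) by (unfold r0; simpl; nra).
  set (dv := Cmod (Cminus u (RtoC 1))). assert (Hdv : 0 <= dv) by apply Cmod_ge_0.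
  assert (HLk : 0 <= LL ^ k) by (apply pow_le; unfold LL; lra).
  set (aS := fun j => Cdiv (wk k (Cpow x (S (S j))) (Cpow u (S (S j)))) (RtoC (INR (S (S j))))).
  assert (HY2 : Y (s * s) <= 1) by (apply Y_le_1; nra).
  assert (B : forall j, Cmod (aS j) <= dv * LL ^ k * s ^ j).
  { intros j. unfold aS. rewrite Cmod_div_R by apply INR_S_pos.
    assert (Hxj : Cmod (Cpow x (S (S j))) = s ^ j * (s * s)) by (rewrite Cmod_pow; fold s; simpl; ring).
    assert (Hsj : s ^ j <= 1) by (apply pow_le1; lra).
    assert (Hsj0 : 0 <= s ^ j) by (apply pow_le; lra).
    assert (Hxr : Cmod (Cpow x (S (S j))) <= r0) by (rewrite Hxj; nra).
    assert (Huj : Cmod (Cpow u (S (S j))) <= 1) by (rewrite Cmod_pow; apply pow_le1; split; auto; apply Cmod_ge_0).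
    destruct (main_ind k _ _ Hxr Huj) as [_ HW].
    rewrite Hxj in HW.
    assert (HYs := Y_scale (s ^ j) (s * s) ltac:(lra) ltac:(nra)).
    assert (HYp : 0 <= Y (s ^ j * (s * s))) by (apply Y_nonneg; nra).
    assert (H1 := Cpow_m1_div u (S j) Hu). fold dv in H1.
    apply Rle_trans with (Cmod (Cminus (Cpow u (S (S j))) (RtoC 1)) / INR (S (S j)) * LL ^ k * Y (s ^ j * (s * s))).
    { unfold Rdiv.
      replace (Cmod (Cminus (Cpow u (S (S j))) (RtoC 1)) * / INR (S (S j)) * LL ^ k * Y (s ^ j * (s * s))) with
        (Cmod (Cminus (Cpow u (S (S j))) (RtoC 1)) * LL ^ k * Y (s ^ j * (s * s)) * / INR (S (S j))) by ring.
      apply Rmult_le_compat_r. apply Rlt_le, inv_INR_S_pos. auto. }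
    assert (0 <= Cmod (Cminus (Cpow u (S (S j))) (RtoC 1)) / INR (S (S j))).
    { apply Rmult_le_pos. apply Cmod_ge_0. apply Rlt_le, inv_INR_S_pos. }
    apply Rle_trans with (dv * LL ^ k * Y (s ^ j * (s * s))).
    apply Rmult_le_compat_r; auto. apply Rmult_le_compat_r; auto.
    apply Rmult_le_compat_l. nra.
    apply Rle_trans with (s ^ j * Y (s * s)); auto. nra. }
  assert (Hgeo : ex_series (fun j => s ^ j)) by (apply ex_series_geom; rewrite Rabs_right; lra).
  assert (ExS : ex_series (fun j => Cmod (aS j))).
  { apply (ex_series_le (fun j => Cmod (aS j)) (fun j => (dv * LL ^ k) * s ^ j)).
    intros j. change (norm (Cmod (aS j))) with (Rabs (Cmod (aS j))). rewrite Rabs_right by (apply Rle_ge, Cmod_ge_0). auto.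
    exact (ex_series_scal_l _ _ Hgeo). }
  destruct (csum_bound aS ExS) as (_ & _ & SB).
  change (Sigmak k x u) with (csum aS).
  eapply Rle_trans. apply SB.
  apply Rle_trans with (Series (fun j => dv * LL ^ k * s ^ j)).
  apply Series_le. intros j; split. apply Cmod_ge_0. auto. exact (ex_series_scal_l _ _ Hgeo).
  rewrite Series_scal_l, Series_geom by (rewrite Rabs_right; lra). fold dv.
  assert (/ (1 - s) <= 2). { rewrite <- (Rinv_inv 2). apply Rinv_le_contravar. lra. lra. }
  assert (0 <= dv * LL ^ k) by nra.
  replace (2 * dv * LL ^ k) with (dv * LL ^ k * 2) by ring.
  apply Rmult_le_compat_l; auto.
Qed.
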